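(* The Kahan map $\mathcal K$ is a Liouville integrable Poisson map: when $n$ is even the functions $J_1,\dots,J_\lambda,H,F_{\lambda+1},\dots,F_{n/2-1}$, and when $n$ is odd the functions $J_1,\dots,J_\lambda,H,F_{\lambda+2},\dots,F_{(n-1)/2},C$, are invariants of $\mathcal K$ (functionally independent and pairwise in involution). It is also superintegrable: the $n-1$ functionally independent first integrals of the continuous system $\dot x_i=x_i\big(\sum_{j>i}a_jx_j-\sum_{j<i}a_jx_j\big)$ are invariants of $\mathcal K$.
   Context: $n\ge1$, $(a_1,\dots,a_n)\in\mathbb R^n\setminus\{0\}$, $\epsilon>0$ small. Poisson bracket on $\mathbb R^n$: $\{x_i,x_j\}=x_ix_j$ for $i<j$. $H=a_1x_1+\dots+a_nx_n$, $v_0:=0$, $v_i:=a_1x_1+\dots+a_ix_i$. $\mathcal K$ is the map $\tilde x_i=x_i\dfrac{(1-\epsilon H)(1+\epsilon H)}{(1-\epsilon H+2\epsilon v_{i-1})(1-\epsilon H+2\epsilon v_i)}$. $\ell$ is the smallest integer $\ge0$ with $a_{\ell+1}\ne0$ and $\lambda:=[\ell/2]$. $J_k:=\dfrac{x_1x_3\cdots x_{2k-1}}{x_2x_4\cdots x_{2k}}$ ($1\le k\le[n/2]$). For $n$ even, $F_k:=v_{2k}\dfrac{x_{2k+2}x_{2k+4}\cdots x_n}{x_{2k+1}x_{2k+3}\cdots x_{n-1}}$; for $n$ odd, $F_k:=v_{2k-1}\dfrac{x_{2k+1}x_{2k+3}\cdots x_n}{x_{2k}x_{2k+2}\cdots x_{n-1}}$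 and $C:=\dfrac{x_1x_3\cdots x_n}{x_2x_4\cdots x_{n-1}}$ (empty products $=1$). *)

(* Defs.v *)
From Stdlib Require Import Reals Lra Lia List.
Open Scope R_scope.

(* Points of R^n are represented as x : nat -> R, coordinates x 1, ..., x n
   (values at indices 0 and > n are irrelevant). *)
Definition point := nat -> R.

Fixpoint sum1 (f : nat -> R) (k : nat) : R :=
  match k with O => 0 | S k' => sum1 f k' + f k end.

Fixpoint prod_cnt (f : nat -> R) (lo c : nat) : R :=
  match c with O => 1 | S c' => f lo * prod_cnt f (S lo) c' end.

Definition prodR (f : nat -> R) (lo hi : nat) : R := prod_cnt f lo (S hi - lo).

Definition vv (a x : point) (i : nat) : R := sum1 (fun j => a j * x j) i.

Definition Hf (n : nat) (a : point) (x : point) : R := vv a x n.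

Definition kahan (n : nat) (a : point) (eps : R) (x : point) : point :=
  fun i =>
    if andb (Nat.leb 1 i) (Nat.leb i n) then
      x i * ((1 - eps * Hf n a x) * (1 + eps * Hf n a x)) /
        ((1 - eps * Hf n a x + 2 * eps * vv a x (i - 1)) *
         (1 - eps * Hf n a x + 2 * eps * vv a x i))
    else x i.

Definition Jf (k : nat) (x : point) : R :=
  prodR (fun j => x (2 * j - 1)%nat / x (2 * j)%nat) 1 k.

Definition Fev (n : nat) (a : point) (k : nat) (x : point) : R :=
  vv a x (2 * k) * prodR (fun j => x (2 * j)%nat / x (2 * j - 1)%nat) (S k) (n / 2).

Definition Fod (n : nat) (a : point) (k : nat) (x : point) : R :=
  vv a x (2 * k - 1) * prodR (fun j => x (2 * j + 1)%nat / x (2 * j)%nat) k ((n - 1) / 2).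

Definition Cf (n : nat) (x : point) : R :=
  x 1%nat * prodR (fun j => x (2 * j + 1)%nat / x (2 * j)%nat) 1 ((n - 1) / 2).

(* The list of invariants for Liouville integrability, with lambda = [l/2]:
   n even : J_1..J_lambda, H, F_{lambda+1}..F_{n/2-1}
   n odd  : J_1..J_lambda, H, F_{lambda+2}..F_{(n-1)/2}, C *)
Definition liouville_list (n : nat) (a : point) (l : nat) : list (point -> R) :=
  let lam := (l / 2)%nat in
  if Nat.even n then
    map Jf (seq 1 lam) ++ (Hf n a :: nil)
      ++ map (Fev n a) (seq (S lam) (n / 2 - 1 - lam))
  else
    map Jf (seq 1 lam) ++ (Hf n a :: nil)
      ++ map (Fod n a) (seq (S (S lam)) ((n - 1) / 2 - 1 - lam))
      ++ (Cf n :: nil).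

Definition upd (x : point) (i : nat) (t : R) : point :=
  fun j => if Nat.eqb j i then t else x j.

Definition gradient (n : nat) (f : point -> R) (x : point) (df : point) : Prop :=
  forall i, (1 <= i <= n)%nat -> derivable_pt_lim (fun t => f (upd x i t)) (x i) (df i).

(* Poisson bracket {x_i,x_j} = x_i x_j (i<j) evaluated on gradients at x:
   {f,g}(x) = sum_{i<j} x_i x_j (d_i f d_j g - d_j f d_i g) *)
Definition pbr (n : nat) (x df dg : point) : R :=
  sum1 (fun j => sum1 (fun i => x i * x j * (df i * dg j - df j * dg i)) (j - 1)) n.

Definition lin_indep (n : nat) (dfs : list point) : Prop :=
  forall c : nat -> R,
    (forall i, (1 <= i <= n)%nat ->
       fold_right Rplus 0
         (map (fun k => c k * nth k dfs (fun _ => 0) i) (seq 0 (length dfs))) = 0) ->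
    forall k, (k < length dfs)%nat -> c k = 0.

Definition indep_at (n : nat) (fs : list (point -> R)) (x : point) : Prop :=
  exists dfs : list point,
    Forall2 (fun f df => gradient n f x df) fs dfs /\ lin_indep n dfs.

(* functional independence on the domain D: the gradients are linearly
   independent on a dense subset of D *)
Definition func_indep (n : nat) (D : point -> Prop) (fs : list (point -> R)) : Prop :=
  forall y, D y -> forall delta, 0 < delta ->
    exists x, D x /\ (forall i, (1 <= i <= n)%nat -> Rabs (x i - y i) < delta)
              /\ indep_at n fs x.

Definition involutive (n : nat) (D : point -> Prop) (fs : list (point -> R)) : Prop :=
  forall f g, In f fs -> In g fs -> forall x, D x ->
    exists df dg, gradient n f x df /\ gradient n g x dg /\ pbr n x df dg = 0.

Definition torus (n : nat) (x : point) : Prop :=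
  forall i, (1 <= i <= n)%nat -> x i <> 0.

(* domain of the Kahan map where everything is defined: x in the torus,
   all denominators of K nonzero, and K(x) again in the torus *)
Definition kdom (n : nat) (a : point) (eps : R) (x : point) : Prop :=
  torus n x /\
  (1 - eps * Hf n a x) * (1 + eps * Hf n a x) <> 0 /\
  (forall i, (i <= n)%nat -> 1 - eps * Hf n a x + 2 * eps * vv a x i <> 0).

Definition invariant (n : nat) (a : point) (eps : R) (f : point -> R) : Prop :=
  forall x, kdom n a eps x -> f (kahan n a eps x) = f x.

Definition poisson_map (n : nat) (a : point) (eps : R) : Prop :=
  forall x, kdom n a eps x -> forall i j, (1 <= i)%nat -> (i < j <= n)%nat ->
    exists dKi dKj,
      gradient n (fun y => kahan n a eps y i) x dKi /\
      gradient n (fun y => kahan n a eps y j) x dKj /\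
      pbr n x dKi dKj = kahan n a eps x i * kahan n a eps x j.

Definition vfield (n : nat) (a x : point) (i : nat) : R :=
  x i * ((vv a x n - vv a x i) - vv a x (i - 1)).

Definition first_integral (n : nat) (a : point) (D : point -> Prop) (f : point -> R) : Prop :=
  forall x, D x -> exists df, gradient n f x df /\ sum1 (fun i => df i * vfield n a x i) n = 0.

(* Main.v *)
Require Import Defs.
From Stdlib Require Import Reals Lra Lia List Arith FunctionalExtensionality.
Open Scope R_scope.

Lemma sum1_ext : forall f g k, (forall j, (1 <= j <= k)%nat -> f j = g j) -> sum1 f k = sum1 g k.
Proof. intros f g k; induction k; intros H; simpl; auto.
  rewrite IHk; [rewrite H; [reflexivity|lia]|intros; apply H; lia]. Qed.

Lemma sum1_plus : forall f g k, sum1 (fun j => f j + g j) k = sum1 f k + sum1 g k.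
Proof. intros f g k; induction k; simpl; [ring| rewrite IHk; ring]. Qed.

Lemma sum1_scal : forall c f k, sum1 (fun j => c * f j) k = c * sum1 f k.
Proof. intros c f k; induction k; simpl; [ring| rewrite IHk; ring]. Qed.

Lemma sum1_zero : forall f k, (forall j, (1 <= j <= k)%nat -> f j = 0) -> sum1 f k = 0.
Proof. intros f k; induction k; intros H; simpl. reflexivity.
  rewrite IHk, H; [ring|lia|intros; apply H; lia]. Qed.

Lemma sum1_minus : forall f g k, sum1 (fun j => f j - g j) k = sum1 f k - sum1 g k.
Proof. intros f g k; induction k; simpl; [ring| rewrite IHk; ring]. Qed.

Lemma sum1_single : forall f k p, (1 <= p <= k)%nat ->
  (forall j, (1 <= j <= k)%nat -> j <> p -> f j = 0) -> sum1 f k = f p.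
Proof. intros f k; induction k; intros p Hp H. lia.
  simpl. destruct (Nat.eq_dec p (S k)).
  - subst. rewrite sum1_zero; [ring|]. intros; apply H; lia.
  - rewrite (IHk p); [|lia|intros; apply H; lia]. rewrite (H (S k)); [ring|lia|lia]. Qed.

Definition vE (j : nat) : nat -> R := fun i => if Nat.eqb j i then 1 else 0.

Lemma sum1_vE : forall j k f, (1 <= j <= k)%nat -> sum1 (fun i => vE j i * f i) k = f j.
Proof. intros j k f Hj. rewrite (sum1_single _ _ j Hj).
  - unfold vE; rewrite Nat.eqb_refl; ring.
  - intros i Hi Hne. unfold vE. destruct (Nat.eqb_spec j i); [lia|ring]. Qed.

Lemma sum1_vE' : forall j k f, (1 <= j <= k)%nat -> sum1 (fun i => f i * vE j i) k = f j.
Proof. intros. rewrite <- (sum1_vE j k f H). apply sum1_ext; intros; ring. Qed.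

Lemma vv_0 : forall a x, vv a x 0 = 0.
Proof. reflexivity. Qed.
Lemma vv_S : forall a x k, vv a x (S k) = vv a x k + a (S k) * x (S k).
Proof. reflexivity. Qed.

Lemma vv_zero : forall a x k, (forall i, (1 <= i <= k)%nat -> a i = 0) -> vv a x k = 0.
Proof. intros. unfold vv. apply sum1_zero. intros j Hj; rewrite H; [ring|lia]. Qed.

Lemma vv_const : forall a x k k', (k <= k')%nat -> (forall i, (k < i <= k')%nat -> a i = 0) ->
  vv a x k' = vv a x k.
Proof. intros a x k k' Hk. induction k'; intros H.
  - assert (k = 0)%nat by lia; subst; reflexivity.
  - destruct (Nat.eq_dec k (S k')). subst; reflexivity.
    rewrite vv_S, IHk'; [|lia|intros; apply H; lia]. rewrite (H (S k')); [ring|lia]. Qed.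

Lemma vv_ext_x : forall a x y k, (forall i, (1 <= i <= k)%nat -> x i = y i) -> vv a x k = vv a y k.
Proof. intros. unfold vv. apply sum1_ext. intros; rewrite H; auto. Qed.

Definition Dk n a eps x k := 1 - eps * Hf n a x + 2 * eps * vv a x k.

Lemma Dk_0 : forall n a eps x, Dk n a eps x 0 = 1 - eps * Hf n a x.
Proof. intros; unfold Dk; rewrite vv_0; ring. Qed.
Lemma Dk_n : forall n a eps x, Dk n a eps x n = 1 + eps * Hf n a x.
Proof. intros; unfold Dk, Hf; ring. Qed.

Lemma kdom_D : forall n a eps x k, kdom n a eps x -> (k <= n)%nat -> Dk n a eps x k <> 0.
Proof. intros n a eps x k [_ [_ H]] Hk. apply H; auto. Qed.

Lemma kahan_eq : forall n a eps x i, (1 <= i <= n)%nat ->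
  kahan n a eps x i = x i * (Dk n a eps x 0 * Dk n a eps x n) /
     (Dk n a eps x (i-1) * Dk n a eps x i).
Proof. intros n a eps x i Hi. unfold kahan.
  replace (Nat.leb 1 i && Nat.leb i n)%bool with true.
  2:{ symmetry; apply andb_true_intro; split; apply Nat.leb_le; lia. }
  rewrite Dk_0, Dk_n. unfold Dk. reflexivity. Qed.

Lemma vv_kahan : forall n a eps x k, kdom n a eps x -> (k <= n)%nat ->
  vv a (kahan n a eps x) k = vv a x k * Dk n a eps x n / Dk n a eps x k.
Proof. intros n a eps x k Hd. induction k; intros Hk.
  - rewrite !vv_0. unfold Rdiv; ring.
  - rewrite vv_S, IHk by lia. rewrite kahan_eq by lia.
    replace (S k - 1)%nat with k by lia.
    pose proof (kdom_D _ _ _ _ 0 Hd ltac:(lia)) as H0.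
    pose proof (kdom_D _ _ _ _ k Hd ltac:(lia)) as H1.
    pose proof (kdom_D _ _ _ _ (S k) Hd ltac:(lia)) as H2.
    unfold Dk in *. rewrite vv_S in *. rewrite vv_0 in *.
    field. auto. Qed.

Lemma Hf_kahan : forall n a eps x, kdom n a eps x -> Hf n a (kahan n a eps x) = Hf n a x.
Proof. intros. unfold Hf at 1. rewrite vv_kahan; auto.
  pose proof (kdom_D _ _ _ _ n H ltac:(lia)). unfold Hf. field. auto. Qed.

Lemma uu_kahan : forall n a eps x k, kdom n a eps x -> (k <= n)%nat ->
  Hf n a (kahan n a eps x) - vv a (kahan n a eps x) k =
  (Hf n a x - vv a x k) * Dk n a eps x 0 / Dk n a eps x k.
Proof. intros. rewrite Hf_kahan, vv_kahan; auto.
  pose proof (kdom_D _ _ _ _ k H H0).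
  unfold Dk in *. rewrite vv_0. unfold Hf in *. field. auto. Qed.

Lemma kahan_nz : forall n a eps x i, kdom n a eps x -> (1 <= i <= n)%nat -> kahan n a eps x i <> 0.
Proof. intros n a eps x i Hd Hi. rewrite kahan_eq; auto.
  pose proof (kdom_D n a eps x (i-1) Hd ltac:(lia)). pose proof (kdom_D n a eps x i Hd ltac:(lia)).
  pose proof (kdom_D n a eps x 0 Hd ltac:(lia)). pose proof (kdom_D n a eps x n Hd ltac:(lia)).
  destruct Hd as [Ht _]. pose proof (Ht i Hi).
  unfold Rdiv. repeat apply Rmult_integral_contrapositive_currified; auto.
  apply Rinv_neq_0_compat. apply Rmult_integral_contrapositive_currified; auto. Qed.

Lemma kahan_ratio : forall n a eps x q, kdom n a eps x -> (1 <= q)%nat -> (S q <= n)%nat ->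
  kahan n a eps x (S q) / kahan n a eps x q =
  x (S q) / x q * (Dk n a eps x (q - 1) / Dk n a eps x (S q)).
Proof. intros n a eps x q Hd H1 H2. rewrite !kahan_eq by lia. replace (S q - 1)%nat with q by lia.
  pose proof (kdom_D n a eps x (q-1) Hd ltac:(lia)). pose proof (kdom_D n a eps x q Hd ltac:(lia)).
  pose proof (kdom_D n a eps x (S q) Hd ltac:(lia)).
  pose proof (kdom_D n a eps x 0 Hd ltac:(lia)). pose proof (kdom_D n a eps x n Hd ltac:(lia)).
  destruct Hd as [Ht _]. pose proof (Ht q ltac:(lia)). pose proof (Ht (S q) ltac:(lia)).
  field. repeat split; auto. Qed.

Lemma prod_cnt_ext : forall f g lo c, (forall j, (lo <= j < lo + c)%nat -> f j = g j) ->
  prod_cnt f lo c = prod_cnt g lo c.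
Proof. intros f g lo c; revert lo; induction c; intros lo H; simpl; auto.
  rewrite H by lia. rewrite IHc; auto. intros; apply H; lia. Qed.

Lemma prod_cnt_mult : forall f g lo c,
  prod_cnt (fun j => f j * g j) lo c = prod_cnt f lo c * prod_cnt g lo c.
Proof. intros f g lo c; revert lo; induction c; intros lo; simpl; [ring|rewrite IHc; ring]. Qed.

Lemma prod_cnt_tele : forall G lo c, (forall j, (lo <= j <= lo + c)%nat -> G j <> 0) ->
  prod_cnt (fun j => G (S j) / G j) lo c = G (lo + c)%nat / G lo.
Proof. intros G lo c; revert lo; induction c; intros lo H; simpl.
  - rewrite Nat.add_0_r. field. apply H; lia.
  - rewrite IHc. replace (S lo + c)%nat with (lo + S c)%nat by lia. field.
    split; apply H; lia. intros; apply H; lia. Qed.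

Lemma prod_cnt_tele' : forall G lo c, (forall j, (lo <= j <= lo + c)%nat -> G j <> 0) ->
  prod_cnt (fun j => G j / G (S j)) lo c = G lo / G (lo + c)%nat.
Proof. intros G lo c; revert lo; induction c; intros lo H; simpl.
  - rewrite Nat.add_0_r. field. apply H; lia.
  - rewrite IHc. replace (S lo + c)%nat with (lo + S c)%nat by lia. field.
    split; apply H; lia. intros; apply H; lia. Qed.

Lemma prod_cnt_shift : forall f s lo c,
  prod_cnt f (lo + s) c = prod_cnt (fun t => f (lo + t)%nat) s c.
Proof. intros f s lo c; revert s; induction c; intros s; simpl; auto.
  rewrite <- IHc. f_equal. f_equal. lia. Qed.

Lemma prod_cnt_shift0 : forall f lo c,
  prod_cnt f lo c = prod_cnt (fun t => f (lo + t)%nat) 0 c.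
Proof. intros. rewrite <- prod_cnt_shift. rewrite Nat.add_0_r. auto. Qed.

Lemma prod_cnt_nz : forall f lo c, (forall j, (lo <= j < lo + c)%nat -> f j <> 0) -> prod_cnt f lo c <> 0.
Proof. intros f lo c; revert lo; induction c; intros lo H; simpl. lra.
  apply Rmult_integral_contrapositive_currified. apply H; lia. apply IHc; intros; apply H; lia. Qed.

Definition FT n a K (y : point) := vv a y K *
  prod_cnt (fun t => y (K + 2 + 2*t)%nat / y (K + 1 + 2*t)%nat) 0 ((n - K)/2).
Definition JH k (y : point) := prod_cnt (fun t => y (2*t+1)%nat / y (2*t+2)%nat) 0 k.
Definition CH M (y : point) := y 1%nat * prod_cnt (fun t => y (2*t+3)%nat / y (2*t+2)%nat) 0 M.

Lemma dbl_half : forall c, ((2 * c) / 2 = c)%nat.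
Proof. intros. rewrite Nat.mul_comm. apply Nat.div_mul. lia. Qed.

Lemma Jf_JH : forall k y, Jf k y = JH k y.
Proof. intros. unfold Jf, prodR, JH. replace (S k - 1)%nat with k by lia.
  rewrite prod_cnt_shift0. apply prod_cnt_ext. intros j _.
  f_equal; f_equal; lia. Qed.

Lemma Fev_FT : forall n a m k y, n = (2 * m)%nat -> (k <= m)%nat -> Fev n a k y = FT n a (2 * k) y.
Proof. intros. unfold Fev, FT, prodR. f_equal.
  replace (n - 2 * k)%nat with (2 * (m - k))%nat by lia. rewrite dbl_half.
  subst n. rewrite dbl_half. replace (S m - S k)%nat with (m - k)%nat by lia.
  rewrite prod_cnt_shift0. apply prod_cnt_ext. intros j _. f_equal; f_equal; lia. Qed.

Lemma Fod_FT : forall n a m k y, n = (2 * m + 1)%nat -> (1 <= k <= S m)%nat ->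
  Fod n a k y = FT n a (2 * k - 1) y.
Proof. intros. unfold Fod, FT, prodR. f_equal.
  replace (n - (2 * k - 1))%nat with (2 * (S m - k))%nat by lia. rewrite dbl_half.
  replace ((n - 1) / 2)%nat with m by (subst n; replace (2*m+1-1)%nat with (2*m)%nat by lia;
    rewrite dbl_half; auto).
  rewrite prod_cnt_shift0. apply prod_cnt_ext. intros j _. f_equal; f_equal; lia. Qed.

Lemma Cf_CH : forall n m y, n = (2 * m + 1)%nat -> Cf n y = CH m y.
Proof. intros. unfold Cf, CH, prodR. f_equal.
  replace ((n - 1) / 2)%nat with m by (subst n; replace (2*m+1-1)%nat with (2*m)%nat by lia;
    rewrite dbl_half; auto).
  replace (S m - 1)%nat with m by lia.
  rewrite prod_cnt_shift0. apply prod_cnt_ext. intros j _. f_equal; f_equal; lia. Qed.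

Lemma kahan_ratio' : forall n a eps x q, kdom n a eps x -> (1 <= q)%nat -> (S q <= n)%nat ->
  kahan n a eps x q / kahan n a eps x (S q) =
  x q / x (S q) * (Dk n a eps x (S q) / Dk n a eps x (q - 1)).
Proof. intros n a eps x q Hd H1 H2. rewrite !kahan_eq by lia. replace (S q - 1)%nat with q by lia.
  pose proof (kdom_D n a eps x (q-1) Hd ltac:(lia)). pose proof (kdom_D n a eps x q Hd ltac:(lia)).
  pose proof (kdom_D n a eps x (S q) Hd ltac:(lia)).
  pose proof (kdom_D n a eps x 0 Hd ltac:(lia)). pose proof (kdom_D n a eps x n Hd ltac:(lia)).
  destruct Hd as [Ht _]. pose proof (Ht q ltac:(lia)). pose proof (Ht (S q) ltac:(lia)).
  field. repeat split; auto. Qed.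

Lemma FT_inv : forall n a eps x K c, kdom n a eps x -> n = (K + 2 * c)%nat ->
  FT n a K (kahan n a eps x) = FT n a K x.
Proof. intros n a eps x K c Hd Hn. unfold FT.
  replace ((n - K) / 2)%nat with c by (rewrite Hn; replace (K + 2*c - K)%nat with (2*c)%nat by lia;
    rewrite dbl_half; auto).
  rewrite vv_kahan by (auto; lia).
  rewrite (prod_cnt_ext _ (fun t => (x (K + 2 + 2 * t)%nat / x (K + 1 + 2 * t)%nat) *
      ((fun t => Dk n a eps x (K + 2 * t)%nat) t / (fun t => Dk n a eps x (K + 2 * t)%nat) (S t)))).
  2:{ intros j Hj. replace (K + 2 + 2 * j)%nat with (S (K + 1 + 2 * j)) by lia.
      rewrite kahan_ratio by (auto; lia). f_equal. f_equal; f_equal; lia. }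
  rewrite prod_cnt_mult, prod_cnt_tele'.
  2:{ intros j Hj. apply kdom_D; auto; lia. }
  cbv beta. rewrite Nat.add_0_l, Nat.mul_0_r, Nat.add_0_r, <- Hn.
  pose proof (kdom_D n a eps x K Hd ltac:(lia)). pose proof (kdom_D n a eps x n Hd ltac:(lia)).
  field. auto. Qed.

Lemma JH_inv : forall n a eps x k, kdom n a eps x -> (2 * k <= n)%nat ->
  (forall i, (1 <= i <= 2 * k)%nat -> a i = 0) ->
  JH k (kahan n a eps x) = JH k x.
Proof. intros n a eps x k Hd Hk Ha. unfold JH.
  rewrite (prod_cnt_ext _ (fun t => (x (2 * t + 1)%nat / x (2 * t + 2)%nat) *
      ((fun t => Dk n a eps x (2 * t)%nat) (S t) / (fun t => Dk n a eps x (2 * t)%nat) t))).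
  2:{ intros j Hj. replace (2 * j + 2)%nat with (S (2 * j + 1)) by lia.
      rewrite kahan_ratio' by (auto; lia). f_equal. f_equal; f_equal; lia. }
  rewrite prod_cnt_mult, (prod_cnt_tele (fun t => Dk n a eps x (2 * t)%nat)).
  2:{ intros j Hj. apply kdom_D; auto; lia. }
  cbv beta. rewrite Nat.add_0_l, Nat.mul_0_r.
  replace (Dk n a eps x (2 * k)) with (Dk n a eps x 0).
  2:{ unfold Dk. rewrite (vv_zero a x (2*k)); auto. }
  pose proof (kdom_D n a eps x 0 Hd ltac:(lia)). field. auto. Qed.

Lemma CH_inv : forall n a eps x m, kdom n a eps x -> n = (2 * m + 1)%nat ->
  CH m (kahan n a eps x) = CH m x.
Proof. intros n a eps x m Hd Hn. unfold CH.
  rewrite (prod_cnt_ext _ (fun t => (x (2 * t + 3)%nat / x (2 * t + 2)%nat) *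
      ((fun t => Dk n a eps x (2 * t + 1)%nat) t / (fun t => Dk n a eps x (2 * t + 1)%nat) (S t)))).
  2:{ intros j Hj. replace (2 * j + 3)%nat with (S (2 * j + 2)) by lia.
      rewrite kahan_ratio by (auto; lia). f_equal. f_equal; f_equal; lia. }
  rewrite prod_cnt_mult, prod_cnt_tele'.
  2:{ intros j Hj. apply kdom_D; auto; lia. }
  cbv beta. replace (2 * (0 + m) + 1)%nat with n by lia. replace (2 * 0 + 1)%nat with 1%nat by lia.
  rewrite kahan_eq by lia. replace (1 - 1)%nat with 0%nat by lia.
  pose proof (kdom_D n a eps x 1 Hd ltac:(lia)). pose proof (kdom_D n a eps x 0 Hd ltac:(lia)).
  pose proof (kdom_D n a eps x n Hd ltac:(lia)).
  field. auto. Qed.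

Lemma upd_same : forall (x : point) i, upd x i (x i) = x.
Proof. intros. apply functional_extensionality. intros j. unfold upd.
  destruct (Nat.eqb_spec j i); subst; auto. Qed.

Lemma grad_ext : forall n f x df dg, gradient n f x df ->
  (forall i, (1 <= i <= n)%nat -> df i = dg i) -> gradient n f x dg.
Proof. intros n f x df dg H E i Hi. rewrite <- E; auto. Qed.

Lemma grad_fext : forall n f g x df, (forall y, f y = g y) -> gradient n f x df -> gradient n g x df.
Proof. intros n f g x df E H i Hi.
  replace (fun t => g (upd x i t)) with (fun t => f (upd x i t)).
  apply H; auto. apply functional_extensionality; intros; auto. Qed.

Lemma grad_const : forall n c x, gradient n (fun _ => c) x (fun _ => 0).
Proof. intros n c x i Hi. apply derivable_pt_lim_const. Qed.

Lemma grad_coord : forall n j x, gradient n (fun y => y j) x (fun i => vE j i).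
Proof. intros n j x i Hi. unfold upd, vE. destruct (Nat.eqb j i) eqn:E.
  - apply Nat.eqb_eq in E; subst. apply derivable_pt_lim_id.
  - apply derivable_pt_lim_const. Qed.

Lemma grad_plus : forall n f g x df dg, gradient n f x df -> gradient n g x dg ->
  gradient n (fun y => f y + g y) x (fun i => df i + dg i).
Proof. intros n f g x df dg Hf Hg i Hi.
  exact (derivable_pt_lim_plus _ _ _ _ _ (Hf i Hi) (Hg i Hi)). Qed.

Lemma grad_minus : forall n f g x df dg, gradient n f x df -> gradient n g x dg ->
  gradient n (fun y => f y - g y) x (fun i => df i - dg i).
Proof. intros n f g x df dg Hf Hg i Hi.
  exact (derivable_pt_lim_minus _ _ _ _ _ (Hf i Hi) (Hg i Hi)). Qed.

Lemma grad_mult : forall n f g x df dg, gradient n f x df -> gradient n g x dg ->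
  gradient n (fun y => f y * g y) x (fun i => df i * g x + f x * dg i).
Proof. intros n f g x df dg Hf Hg i Hi.
  pose proof (derivable_pt_lim_mult _ _ _ _ _ (Hf i Hi) (Hg i Hi)) as H.
  cbv beta in H. rewrite upd_same in H. exact H. Qed.

Lemma grad_div : forall n f g x df dg, gradient n f x df -> gradient n g x dg -> g x <> 0 ->
  gradient n (fun y => f y / g y) x (fun i => (df i * g x - dg i * f x) / (g x * g x)).
Proof. intros n f g x df dg Hf Hg Hx i Hi.
  assert (Hx' : (fun t => g (upd x i t)) (x i) <> 0) by (cbv beta; rewrite upd_same; auto).
  pose proof (derivable_pt_lim_div _ _ _ _ _ (Hf i Hi) (Hg i Hi) Hx') as H.
  cbv beta in H. rewrite upd_same in H. unfold Rsqr in H. exact H. Qed.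

Lemma grad_scal : forall n c f x df, gradient n f x df ->
  gradient n (fun y => c * f y) x (fun i => c * df i).
Proof. intros n c f x df Hf i Hi.
  exact (derivable_pt_lim_scal _ _ _ _ (Hf i Hi)). Qed.

Definition sg n f (x : point) (s : nat -> R) := gradient n f x (fun i => s i / x i).

Lemma sg_ext : forall n f x s s', sg n f x s ->
  (forall i, (1 <= i <= n)%nat -> s i = s' i) -> sg n f x s'.
Proof. intros. eapply grad_ext; eauto. intros; simpl; rewrite H0; auto. Qed.

Lemma sg_fext : forall n f g x s, (forall y, f y = g y) -> sg n f x s -> sg n g x s.
Proof. intros. eapply grad_fext; eauto. Qed.

Lemma sg_const : forall n c x, sg n (fun _ => c) x (fun _ => 0).
Proof. intros. eapply grad_ext. apply grad_const. intros; simpl; unfold Rdiv; ring. Qed.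

Lemma sg_coord : forall n j x, torus n x -> sg n (fun y => y j) x (fun i => x j * vE j i).
Proof. intros. eapply grad_ext. apply grad_coord. intros i Hi. simpl. unfold vE.
  destruct (Nat.eqb_spec j i). subst. field. apply H; auto. unfold Rdiv; ring. Qed.

Lemma sg_plus : forall n f g x s t, sg n f x s -> sg n g x t ->
  sg n (fun y => f y + g y) x (fun i => s i + t i).
Proof. intros. eapply grad_ext. apply grad_plus; eauto. intros; simpl; unfold Rdiv; ring. Qed.

Lemma sg_minus : forall n f g x s t, sg n f x s -> sg n g x t ->
  sg n (fun y => f y - g y) x (fun i => s i - t i).
Proof. intros. eapply grad_ext. apply grad_minus; eauto. intros; simpl; unfold Rdiv; ring. Qed.

Lemma sg_mult : forall n f g x s t, sg n f x s -> sg n g x t ->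
  sg n (fun y => f y * g y) x (fun i => s i * g x + f x * t i).
Proof. intros. eapply grad_ext. apply grad_mult; eauto. intros; simpl; unfold Rdiv; ring. Qed.

Lemma sg_div : forall n f g x s t, torus n x -> sg n f x s -> sg n g x t -> g x <> 0 ->
  sg n (fun y => f y / g y) x (fun i => (s i * g x - f x * t i) / (g x * g x)).
Proof. intros. eapply grad_ext. apply grad_div; eauto. intros; simpl.
  field. split; [auto|apply H; auto]. Qed.

Lemma sg_scal : forall n c f x s, sg n f x s -> sg n (fun y => c * f y) x (fun i => c * s i).
Proof. intros. eapply grad_ext. apply grad_scal; eauto. intros; simpl; unfold Rdiv; ring. Qed.

Lemma sg_sum1 : forall n (F : nat -> point -> R) (S : nat -> nat -> R) x k,
  (forall j, (1 <= j <= k)%nat -> sg n (F j) x (S j)) ->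
  sg n (fun y => sum1 (fun j => F j y) k) x (fun i => sum1 (fun j => S j i) k).
Proof. intros n F S x k; induction k; intros H; simpl.
  - apply sg_const.
  - apply sg_plus. apply IHk; intros; apply H; lia. apply H; lia. Qed.

Definition vP (a x : point) k : nat -> R := fun i => if Nat.leb i k then a i * x i else 0.

Lemma sg_vv : forall n a x k, torus n x -> sg n (fun y => vv a y k) x (vP a x k).
Proof. intros. unfold vv.
  eapply sg_ext. apply (sg_sum1 n (fun j y => a j * y j) (fun j i => a j * (x j * vE j i))).
  intros; apply sg_scal, sg_coord; auto.
  intros i Hi. simpl. unfold vP. destruct (Nat.leb_spec i k).
  - rewrite (sum1_single _ k i).
    + unfold vE; rewrite Nat.eqb_refl; ring.
    + lia.
    + intros j Hj Hne. unfold vE. destruct (Nat.eqb_spec j i); [lia|ring].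
  - apply sum1_zero. intros j Hj. unfold vE. destruct (Nat.eqb_spec j i); [lia|ring]. Qed.

Lemma sg_Hf : forall n a x, torus n x -> sg n (Hf n a) x (vP a x n).
Proof. intros. unfold Hf. apply sg_vv; auto. Qed.

Fixpoint sumc (f : nat -> R) (lo c : nat) : R :=
  match c with O => 0 | S c' => f lo + sumc f (S lo) c' end.

Lemma sg_ratio : forall n p q x, torus n x -> (1 <= q <= n)%nat ->
  sg n (fun y => y p / y q) x (fun i => x p / x q * (vE p i - vE q i)).
Proof. intros. eapply sg_ext. apply sg_div; auto. apply sg_coord; auto. apply sg_coord; auto.
  intros i Hi; simpl. field. exact (H q H0). Qed.

Lemma sg_prodratio : forall n p q x lo c, torus n x ->
  (forall t, (lo <= t < lo + c)%nat -> (1 <= q t <= n)%nat) ->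
  sg n (fun y => prod_cnt (fun t => y (p t) / y (q t)) lo c) x
     (fun i => prod_cnt (fun t => x (p t) / x (q t)) lo c *
               sumc (fun t => vE (p t) i - vE (q t) i) lo c).
Proof. intros n p q x lo c Ht; revert lo; induction c; intros lo Hq; simpl.
  - eapply sg_ext. apply sg_const. intros; simpl; ring.
  - eapply sg_ext. apply sg_mult. apply sg_ratio; auto. apply Hq; lia.
    apply IHc. intros; apply Hq; lia.
    intros i Hi. simpl. ring. Qed.

Definition br n (p q : nat -> R) :=
  sum1 (fun j => sum1 (fun i => p i * q j - p j * q i) (j - 1)) n.
Definition Tq n (q : nat -> R) i := (sum1 q n - sum1 q i) - sum1 q (i - 1).

Lemma sum1_mult_const : forall f c k, sum1 (fun i => f i * c) k = sum1 f k * c.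
Proof. intros. induction k; simpl; [ring|rewrite IHk; ring]. Qed.

Lemma sum1_S : forall f k, sum1 f (S k) = sum1 f k + f (S k).
Proof. reflexivity. Qed.

Lemma br_T : forall n p q, br n p q = sum1 (fun i => p i * Tq n q i) n.
Proof. intros n p q. induction n.
  - reflexivity.
  - unfold br in *. simpl sum1 at 1. rewrite IHn. replace (S n - 1)%nat with n by lia.
    simpl sum1 at 3.
    rewrite (sum1_ext (fun i => p i * Tq (S n) q i) (fun i => p i * Tq n q i + p i * q (S n))).
    2:{ intros j Hj. unfold Tq. rewrite (sum1_S q n). ring. }
    rewrite sum1_plus, sum1_minus, sum1_mult_const, sum1_scal.
    unfold Tq. rewrite (sum1_S q n). rewrite ?Nat.sub_0_r. rewrite ?sum1_mult_const.
    replace (S n - 1)%nat with n by lia. ring. Qed.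

Lemma pbr_sg : forall n x s t, torus n x ->
  pbr n x (fun i => s i / x i) (fun i => t i / x i) = br n s t.
Proof. intros. unfold pbr, br. apply sum1_ext. intros j Hj. apply sum1_ext. intros i Hi.
  field. split; apply H; lia. Qed.

Lemma sum1_opp : forall f k, sum1 (fun i => - f i) k = - sum1 f k.
Proof. intros. induction k; simpl; [ring|rewrite IHk; ring]. Qed.

Lemma br_anti : forall n p q, br n p q = - br n q p.
Proof. intros. unfold br. rewrite <- sum1_opp. apply sum1_ext. intros j _.
  rewrite <- sum1_opp. apply sum1_ext. intros; ring. Qed.

Lemma br_self : forall n p, br n p p = 0.
Proof. intros. pose proof (br_anti n p p). lra. Qed.

Lemma br_addl : forall n p p' q, br n (fun i => p i + p' i) q = br n p q + br n p' q.
Proof. intros. rewrite !br_T, <- sum1_plus. apply sum1_ext; intros; ring. Qed.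
Lemma br_scall : forall n c p q, br n (fun i => c * p i) q = c * br n p q.
Proof. intros. rewrite !br_T, <- sum1_scal. apply sum1_ext; intros; ring. Qed.
Lemma br_addr : forall n p q q', br n p (fun i => q i + q' i) = br n p q + br n p q'.
Proof. intros. rewrite br_anti, br_addl, (br_anti n p q), (br_anti n p q'). ring. Qed.
Lemma br_scalr : forall n c p q, br n p (fun i => c * q i) = c * br n p q.
Proof. intros. rewrite br_anti, br_scall, (br_anti n p q). ring. Qed.
Lemma br_minusr : forall n p q q', br n p (fun i => q i - q' i) = br n p q - br n p q'.
Proof. intros. replace (fun i => q i - q' i) with (fun i => q i + (-1) * q' i).
  rewrite br_addr, br_scalr; ring. apply functional_extensionality; intros; ring. Qed.

Lemma br_extl : forall n p p' q, (forall i, (1 <= i <= n)%nat -> p i = p' i) -> br n p q = br n p' q.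
Proof. intros. rewrite !br_T. apply sum1_ext; intros. rewrite H; auto. Qed.
Lemma br_extr : forall n p q q', (forall i, (1 <= i <= n)%nat -> q i = q' i) -> br n p q = br n p q'.
Proof. intros. rewrite br_anti, (br_anti n p q'). f_equal. apply br_extl; auto. Qed.

Lemma sumc_S : forall f lo c, sumc f lo (S c) = sumc f lo c + f (lo + c)%nat.
Proof. intros f lo c; revert lo; induction c; intros lo; simpl.
  - rewrite Nat.add_0_r; ring.
  - simpl in IHc. rewrite IHc. replace (S lo + c)%nat with (lo + S c)%nat by lia. ring. Qed.

Lemma br_sumcr : forall n p (V : nat -> nat -> R) lo c,
  br n p (fun i => sumc (fun t => V t i) lo c) = sumc (fun t => br n p (V t)) lo c.
Proof. intros n p V lo c; revert lo; induction c; intros lo; simpl.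
  - rewrite br_T. apply sum1_zero; intros; unfold Tq; simpl.
    rewrite !(sum1_zero (fun _ => 0)) by auto. ring.
  - rewrite br_addr. rewrite IHc. auto. Qed.

Lemma sum1_sumc : forall (g : nat -> nat -> R) lo c m,
  sum1 (fun i => sumc (fun t => g t i) lo c) m = sumc (fun t => sum1 (g t) m) lo c.
Proof. intros g lo c m; revert lo; induction c; intros lo; simpl.
  - apply sum1_zero; auto.
  - rewrite sum1_plus, IHc. auto. Qed.

Lemma sumc_zero : forall f lo c, (forall t, (lo <= t < lo + c)%nat -> f t = 0) -> sumc f lo c = 0.
Proof. intros f lo c; revert lo; induction c; intros lo H; simpl; auto.
  rewrite H, IHc; [ring| |lia]. intros; apply H; lia. Qed.

Lemma sumc_ext : forall f g lo c, (forall t, (lo <= t < lo + c)%nat -> f t = g t) -> sumc f lo c = sumc g lo c.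
Proof. intros f g lo c; revert lo; induction c; intros lo H; simpl; auto.
  rewrite H, IHc; [ring| |lia]. intros; apply H; lia. Qed.

Lemma sumc_plus : forall f g lo c, sumc (fun t => f t + g t) lo c = sumc f lo c + sumc g lo c.
Proof. intros f g lo c; revert lo; induction c; intros lo; simpl; [ring|rewrite IHc; ring]. Qed.
Lemma sumc_scal : forall k f lo c, sumc (fun t => k * f t) lo c = k * sumc f lo c.
Proof. intros k f lo c; revert lo; induction c; intros lo; simpl; [ring|rewrite IHc; ring]. Qed.

Lemma sum1_vE_pref : forall j m, (1 <= j)%nat -> sum1 (vE j) m = if Nat.leb j m then 1 else 0.
Proof. intros j m Hj. induction m; simpl.
  - destruct (Nat.leb_spec j 0); [lia|auto].
  - rewrite IHm. unfold vE. destruct (Nat.leb_spec j m), (Nat.leb_spec j (S m)), (Nat.eqb_spec j (S m)); try lia; ring. Qed.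

Lemma sum1_pair : forall q m, (1 <= q)%nat ->
  sum1 (fun i => vE (S q) i - vE q i) m = - (if Nat.eqb m q then 1 else 0).
Proof. intros. rewrite sum1_minus, !sum1_vE_pref by lia.
  destruct (Nat.leb_spec (S q) m), (Nat.leb_spec q m), (Nat.eqb_spec m q); try lia; ring. Qed.

Lemma Tq_pair : forall n q i, (1 <= q)%nat -> (S q <= n)%nat -> (1 <= i)%nat ->
  Tq n (fun m => vE (S q) m - vE q m) i = vE q i + vE (S q) i.
Proof. intros. unfold Tq. rewrite !sum1_pair by lia. unfold vE.
  destruct (Nat.eqb_spec n q), (Nat.eqb_spec i q), (Nat.eqb_spec (i-1) q),
    (Nat.eqb_spec q i), (Nat.eqb_spec (S q) i); try lia; ring. Qed.

Lemma br_pair : forall n p q, (1 <= q)%nat -> (S q <= n)%nat ->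
  br n p (fun m => vE (S q) m - vE q m) = p q + p (S q).
Proof. intros. rewrite br_T.
  rewrite (sum1_ext _ (fun i => vE q i * p i + vE (S q) i * p i)).
  2:{ intros. rewrite Tq_pair by lia. ring. }
  rewrite sum1_plus, !sum1_vE by lia. auto. Qed.

Lemma pairsum : forall p K c,
  sumc (fun t => p (K + 1 + 2 * t)%nat + p (K + 2 + 2 * t)%nat) 0 c = sum1 p (K + 2 * c) - sum1 p K.
Proof. intros p K c. induction c.
  - simpl. rewrite Nat.add_0_r. ring.
  - rewrite sumc_S, IHc. replace (K + 2 * S c)%nat with (S (S (K + 2 * c))) by lia.
    rewrite !sum1_S. replace (K + 1 + 2 * (0 + c))%nat with (S (K + 2 * c)) by lia.
    replace (K + 2 + 2 * (0 + c))%nat with (S (S (K + 2 * c))) by lia. ring. Qed.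

Definition pairs K c : nat -> R := fun i => sumc (fun t => vE (K + 2 + 2 * t) i - vE (K + 1 + 2 * t) i) 0 c.

Lemma br_pairs : forall n p K c, (K + 2 * c <= n)%nat ->
  br n p (pairs K c) = sum1 p (K + 2 * c) - sum1 p K.
Proof. intros. unfold pairs. rewrite br_sumcr. rewrite <- pairsum. apply sumc_ext.
  intros t Ht. replace (K + 2 + 2 * t)%nat with (S (K + 1 + 2 * t)) by lia.
  rewrite br_pair by lia. auto. Qed.

Lemma sum1_pairs : forall K c m, (forall t, (t < c)%nat -> m <> (K + 1 + 2 * t)%nat) ->
  sum1 (pairs K c) m = 0.
Proof. intros. unfold pairs. rewrite sum1_sumc. apply sumc_zero. intros t Ht.
  replace (K + 2 + 2 * t)%nat with (S (K + 1 + 2 * t)) by lia.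
  rewrite sum1_pair by lia. destruct (Nat.eqb_spec m (K + 1 + 2 * t)).
  exfalso; apply (H t); lia. ring. Qed.

Lemma pairs_low : forall K c i, (i <= K)%nat -> pairs K c i = 0.
Proof. intros. unfold pairs. apply sumc_zero. intros. unfold vE.
  destruct (Nat.eqb_spec (K + 2 + 2 * t) i), (Nat.eqb_spec (K + 1 + 2 * t) i); try lia; ring. Qed.

Lemma pairs_high : forall K c i, (K + 2 * c < i)%nat -> pairs K c i = 0.
Proof. intros. unfold pairs. apply sumc_zero. intros. unfold vE.
  destruct (Nat.eqb_spec (K + 2 + 2 * t) i), (Nat.eqb_spec (K + 1 + 2 * t) i); try lia; ring. Qed.

Ltac dec := repeat match goal with
  | |- context [Nat.eqb ?a ?b] => destruct (Nat.eqb_spec a b)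
  | |- context [Nat.leb ?a ?b] => destruct (Nat.leb_spec a b) end.

Lemma pairs_first : forall K c, (1 <= c)%nat -> pairs K c (S K) = -1.
Proof. intros. unfold pairs. destruct c. lia. simpl.
  rewrite sumc_zero. unfold vE. dec; try lia; lra.
  intros t Ht. cbv beta. unfold vE. dec; try lia; lra. Qed.

Lemma sum1_vP : forall a x k m, sum1 (vP a x k) m = vv a x (Nat.min m k).
Proof. intros. induction m. reflexivity.
  rewrite sum1_S, IHm. unfold vP. destruct (Nat.leb_spec (S m) k).
  - replace (Nat.min m k) with m by lia. replace (Nat.min (S m) k) with (S m) by lia. rewrite vv_S; auto.
  - replace (Nat.min m k) with k by lia. replace (Nat.min (S m) k) with k by lia. ring. Qed.

Lemma Tq_vP : forall n a x k i, (k <= n)%nat ->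
  Tq n (vP a x k) i = vv a x k - vv a x (Nat.min i k) - vv a x (Nat.min (i-1) k).
Proof. intros. unfold Tq. rewrite !sum1_vP. rewrite Nat.min_r by lia. auto. Qed.

Lemma sum1_vP_G : forall a x k n G, (k <= n)%nat ->
  sum1 (fun i => vP a x k i * G i) n = sum1 (fun i => a i * x i * G i) k.
Proof. intros a x k n G Hk. induction n.
  - assert (k = 0)%nat by lia; subst; reflexivity.
  - destruct (Nat.eq_dec k (S n)).
    + subst. rewrite !sum1_S. f_equal.
      * apply sum1_ext. intros j Hj. unfold vP. dec; [auto|lia].
      * unfold vP. dec; [auto|lia].
    + rewrite sum1_S, IHn by lia. unfold vP. dec; [lia|ring]. Qed.

Lemma br_PP : forall n a x k p, (k <= p)%nat -> (p <= n)%nat ->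
  br n (vP a x k) (vP a x p) = vv a x k * (vv a x p - vv a x k).
Proof. intros. rewrite br_T. rewrite sum1_vP_G by lia.
  rewrite (sum1_ext _ (fun i => a i * x i * (vv a x p - vv a x i - vv a x (i-1)))).
  2:{ intros. rewrite Tq_vP by lia. rewrite !Nat.min_l by lia. auto. }
  clear H0. induction k. rewrite vv_0. simpl. ring.
  rewrite sum1_S, IHk by lia. rewrite vv_S. replace (S k - 1)%nat with k by lia. ring. Qed.

Lemma br_EP : forall n a x j k, (1 <= j <= n)%nat -> (k <= n)%nat ->
  br n (vE j) (vP a x k) = vv a x k - vv a x (Nat.min j k) - vv a x (Nat.min (j-1) k).
Proof. intros. rewrite br_T, sum1_vE by lia. apply Tq_vP; auto. Qed.

Lemma br_Eq : forall n j q, (1 <= j <= n)%nat -> br n (vE j) q = Tq n q j.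
Proof. intros. rewrite br_T, sum1_vE by lia. auto. Qed.

Lemma Tq_vE : forall n j i, (1 <= j <= n)%nat ->
  Tq n (vE j) i = 1 - (if Nat.leb j i then 1 else 0) - (if Nat.leb j (i-1) then 1 else 0).
Proof. intros. unfold Tq. rewrite !sum1_vE_pref by lia.
  destruct (Nat.leb_spec j n); [ring|lia]. Qed.

Definition cc n a eps x k := eps / Dk n a eps x k.

Definition ell n a eps x i : nat -> R := fun m =>
  vE i m + ((-2 * cc n a eps x (i-1)) * vP a x (i-1) m +
  ((-2 * cc n a eps x i) * vP a x i m +
   ((- cc n a eps x 0 + cc n a eps x n + cc n a eps x (i-1) + cc n a eps x i) * vP a x n m))).

Lemma kahan_fun : forall n a eps i, (1 <= i <= n)%nat -> forall y,
  kahan n a eps y i = y i * ((1 - eps * Hf n a y) * (1 + eps * Hf n a y)) /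
    ((1 - eps * Hf n a y + 2 * eps * vv a y (i - 1)) * (1 - eps * Hf n a y + 2 * eps * vv a y i)).
Proof. intros. unfold kahan.
  replace (Nat.leb 1 i && Nat.leb i n)%bool with true; auto.
  symmetry; apply andb_true_intro; split; apply Nat.leb_le; lia. Qed.

Lemma vP_0 : forall a x m, (1 <= m)%nat -> vP a x 0 m = 0.
Proof. intros. unfold vP. destruct (Nat.leb_spec m 0); [lia|auto]. Qed.

Lemma sg_kahan : forall n a eps x i, kdom n a eps x -> (1 <= i <= n)%nat ->
  sg n (fun y => kahan n a eps y i) x (fun m => kahan n a eps x i * ell n a eps x i m).
Proof. intros n a eps x i Hd Hi.
  assert (Ht : torus n x) by (destruct Hd; auto).
  eapply sg_fext. intros y; symmetry; apply kahan_fun; auto.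
  eapply sg_ext.
  - apply sg_div; auto.
    + apply sg_mult. apply sg_coord; auto.
      apply sg_mult; apply sg_minus || apply sg_plus; try apply sg_const; apply sg_scal; apply sg_Hf; auto.
    + apply sg_mult; apply sg_plus; try apply sg_scal; try apply sg_vv; auto;
        apply sg_minus; try apply sg_const; apply sg_scal; apply sg_Hf; auto.
    + pose proof (kdom_D n a eps x (i-1) Hd ltac:(lia)). pose proof (kdom_D n a eps x i Hd ltac:(lia)).
      unfold Dk in *. apply Rmult_integral_contrapositive_currified; auto.
  - intros m Hm. simpl. rewrite kahan_eq by auto. unfold ell, cc.
    pose proof (kdom_D n a eps x (i-1) Hd ltac:(lia)). pose proof (kdom_D n a eps x i Hd ltac:(lia)).
    pose proof (kdom_D n a eps x 0 Hd ltac:(lia)). pose proof (kdom_D n a eps x n Hd ltac:(lia)).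
    rewrite Dk_0, Dk_n in *. unfold Dk in *.
    field. repeat split; auto. Qed.

Ltac mins := repeat match goal with
  | |- context [Nat.min ?a ?b] => first [rewrite (Nat.min_l a b) by lia | rewrite (Nat.min_r a b) by lia] end.

Lemma br_EE : forall n i j, (1 <= i)%nat -> (i < j <= n)%nat -> br n (vE i) (vE j) = 1.
Proof. intros. rewrite br_Eq by lia. rewrite Tq_vE by lia. dec; try lia; ring. Qed.

Lemma br_PE : forall n a x k j, (1 <= j <= n)%nat -> (k <= n)%nat ->
  br n (vP a x k) (vE j) = - (vv a x k - vv a x (Nat.min j k) - vv a x (Nat.min (j-1) k)).
Proof. intros. rewrite br_anti, br_EP; auto. Qed.

Lemma br_PP' : forall n a x k p, (p < k)%nat -> (k <= n)%nat ->
  br n (vP a x k) (vP a x p) = - (vv a x p * (vv a x k - vv a x p)).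
Proof. intros. rewrite br_anti, br_PP; auto; lia. Qed.

Lemma br_ell : forall n a eps x i j, kdom n a eps x -> (1 <= i)%nat -> (i < j <= n)%nat ->
  br n (ell n a eps x i) (ell n a eps x j) = 1.
Proof. intros n a eps x i j Hd Hi Hj. unfold ell.
  rewrite !br_addl, !br_scall, !br_addr, !br_scalr.
  rewrite br_EE by lia.
  rewrite !br_EP by lia. rewrite !br_PE by lia.
  rewrite (br_PP n a x (i-1) (j-1)) by lia.
  rewrite (br_PP n a x (i-1) j) by lia.
  rewrite (br_PP n a x (i-1) n) by lia.
  rewrite (br_PP n a x i (j-1)) by lia.
  rewrite (br_PP n a x i j) by lia.
  rewrite (br_PP n a x i n) by lia.
  rewrite (br_self n (vP a x n)).
  destruct (Nat.eq_dec j n).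
  - subst j. rewrite (br_PP n a x n n) by lia.
    rewrite (br_PP' n a x n (n-1)) by lia. mins.
    pose proof (kdom_D n a eps x (i-1) Hd ltac:(lia)). pose proof (kdom_D n a eps x i Hd ltac:(lia)).
    pose proof (kdom_D n a eps x (n-1) Hd ltac:(lia)).
    pose proof (kdom_D n a eps x 0 Hd ltac:(lia)). pose proof (kdom_D n a eps x n Hd ltac:(lia)).
    unfold cc. rewrite Dk_0, Dk_n in *. unfold Dk in *. unfold Hf in *.
    field. repeat split; auto.
  - rewrite (br_PP' n a x n (j-1)) by lia. rewrite (br_PP' n a x n j) by lia. mins.
    pose proof (kdom_D n a eps x (i-1) Hd ltac:(lia)). pose proof (kdom_D n a eps x i Hd ltac:(lia)).
    pose proof (kdom_D n a eps x (j-1) Hd ltac:(lia)). pose proof (kdom_D n a eps x j Hd ltac:(lia)).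
    pose proof (kdom_D n a eps x 0 Hd ltac:(lia)). pose proof (kdom_D n a eps x n Hd ltac:(lia)).
    unfold cc. rewrite Dk_0, Dk_n in *. unfold Dk in *. unfold Hf in *.
    field. repeat split; auto. Qed.

Lemma poisson_ok : forall n a eps, poisson_map n a eps.
Proof. intros n a eps x Hd i j Hi Hj.
  assert (Ht : torus n x) by (destruct Hd; auto).
  exists (fun m => kahan n a eps x i * ell n a eps x i m / x m).
  exists (fun m => kahan n a eps x j * ell n a eps x j m / x m).
  split; [apply (sg_kahan n a eps x i); auto; lia|].
  split; [apply (sg_kahan n a eps x j); auto; lia|].
  rewrite (pbr_sg n x (fun m => kahan n a eps x i * ell n a eps x i m)
                      (fun m => kahan n a eps x j * ell n a eps x j m)) by auto.
  rewrite br_scall, br_scalr, br_ell; auto. ring. Qed.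

Definition PiF n K (y : point) := prod_cnt (fun t => y (K + 2 + 2*t)%nat / y (K + 1 + 2*t)%nat) 0 ((n - K)/2).
Definition PiC M (y : point) := prod_cnt (fun t => y (2*t+3)%nat / y (2*t+2)%nat) 0 M.

Definition Jvec k (x : point) : nat -> R := fun m => JH k x * (- pairs 0 k m).
Definition Fvec n a K (x : point) : nat -> R := fun m =>
  PiF n K x * vP a x K m + FT n a K x * pairs K ((n - K)/2) m.
Definition Cvec M (x : point) : nat -> R := fun m => CH M x * (vE 1 m + pairs 1 M m).

Lemma FT_PiF : forall n a K y, FT n a K y = vv a y K * PiF n K y.
Proof. reflexivity. Qed.

Lemma sumc_opp : forall f lo c, sumc (fun t => - f t) lo c = - sumc f lo c.
Proof. intros f lo c; revert lo; induction c; intros lo; simpl; [ring|rewrite IHc; ring]. Qed.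

Lemma sg_JH : forall n k x, torus n x -> (2 * k <= n)%nat -> sg n (JH k) x (Jvec k x).
Proof. intros. unfold JH.
  eapply sg_ext. apply (sg_prodratio n (fun t => 2*t+1)%nat (fun t => 2*t+2)%nat x 0 k); auto.
  intros; lia.
  intros m Hm. unfold Jvec, pairs, JH. f_equal. rewrite <- sumc_opp. apply sumc_ext. intros.
  replace (0 + 2 + 2 * t)%nat with (2 * t + 2)%nat by lia.
  replace (0 + 1 + 2 * t)%nat with (2 * t + 1)%nat by lia. ring. Qed.

Lemma sg_FT : forall n a K x, torus n x -> (K <= n)%nat -> sg n (FT n a K) x (Fvec n a K x).
Proof. intros. unfold FT.
  eapply sg_ext. apply sg_mult. apply sg_vv; auto.
  apply (sg_prodratio n (fun t => K + 2 + 2*t)%nat (fun t => K + 1 + 2*t)%nat x 0 ((n-K)/2)); auto.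
  intros t Ht. split; [lia|]. assert (2 * ((n - K) / 2) <= n - K)%nat by (apply Nat.Div0.mul_div_le). lia.
  intros m Hm. unfold Fvec, FT, PiF, pairs. ring. Qed.

Lemma sg_CH : forall n M x, torus n x -> n = (2 * M + 1)%nat -> sg n (CH M) x (Cvec M x).
Proof. intros. unfold CH.
  eapply sg_ext. apply sg_mult. apply sg_coord; auto.
  apply (sg_prodratio n (fun t => 2*t+3)%nat (fun t => 2*t+2)%nat x 0 M); auto.
  intros t Ht. lia.
  intros m Hm. unfold Cvec, CH, pairs. cbv beta.
  rewrite (sumc_ext (fun t => vE (1 + 2 + 2 * t) m - vE (1 + 1 + 2 * t) m)
     (fun t => vE (2 * t + 3) m - vE (2 * t + 2) m)).
  ring. intros. f_equal; f_equal; lia. Qed.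

Lemma br_Jvec : forall n s k x, (2 * k <= n)%nat -> br n s (Jvec k x) = - JH k x * sum1 s (2 * k).
Proof. intros. unfold Jvec.
  rewrite (br_extr n s _ (fun m => (- JH k x) * pairs 0 k m)) by (intros; ring).
  rewrite br_scalr, br_pairs by lia. simpl (sum1 s 0). rewrite Nat.add_0_l. ring. Qed.

Lemma br_Cvec : forall n s M x, n = (2 * M + 1)%nat -> br n s (Cvec M x) = 0.
Proof. intros. unfold Cvec. rewrite br_scalr, br_addr, br_pairs by lia.
  rewrite br_anti, br_Eq by lia. unfold Tq. simpl (sum1 s (1 - 1)). rewrite sum1_S. simpl (sum1 s 0).
  replace (1 + 2 * M)%nat with n by lia. ring. Qed.

Lemma br_Fvec : forall n a s K x c, n = (K + 2 * c)%nat ->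
  br n s (Fvec n a K x) = PiF n K x * br n s (vP a x K) + FT n a K x * (sum1 s n - sum1 s K).
Proof. intros. unfold Fvec. rewrite br_addr, !br_scalr, br_pairs.
  replace ((n - K) / 2)%nat with c. rewrite <- H. auto.
  rewrite H. replace (K + 2 * c - K)%nat with (2 * c)%nat by lia. rewrite dbl_half; auto.
  replace ((n - K) / 2)%nat with c. lia.
  rewrite H. replace (K + 2 * c - K)%nat with (2 * c)%nat by lia. rewrite dbl_half; auto. Qed.

Lemma FT_c : forall n K c, n = (K + 2 * c)%nat -> ((n - K) / 2 = c)%nat.
Proof. intros. rewrite H. replace (K + 2 * c - K)%nat with (2 * c)%nat by lia. apply dbl_half. Qed.

Lemma sum1_Jvec : forall k k' x, sum1 (Jvec k' x) (2 * k) = 0.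
Proof. intros. unfold Jvec. rewrite sum1_scal. rewrite sum1_opp. rewrite sum1_pairs. ring.
  intros; lia. Qed.

Lemma sum1_Fvec : forall n a K c x m, n = (K + 2 * c)%nat -> (m <= K)%nat ->
  sum1 (Fvec n a K x) m = PiF n K x * vv a x m.
Proof. intros. unfold Fvec. rewrite sum1_plus, !sum1_scal, sum1_vP, sum1_pairs.
  rewrite Nat.min_l by lia. ring. intros; lia. Qed.

Lemma sum1_Fvec_par : forall n a K c x m c', n = (K + 2 * c)%nat -> m = (K + 2 * c')%nat ->
  sum1 (Fvec n a K x) m = PiF n K x * vv a x (Nat.min m K).
Proof. intros. unfold Fvec. rewrite sum1_plus, !sum1_scal, sum1_vP, sum1_pairs.
  ring. intros; lia. Qed.

Definition kvecP n a l (x : point) (s : nat -> R) : Prop :=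
  (exists k, (1 <= k)%nat /\ (2 * k <= l)%nat /\ s = Jvec k x) \/
  s = vP a x n \/
  (exists K c, (l < K)%nat /\ n = (K + 2 * c)%nat /\ s = Fvec n a K x) \/
  (exists M, n = (2 * M + 1)%nat /\ s = Cvec M x).

Lemma sum1_kvec_low : forall n a l x s k, (l < n)%nat -> (forall i, (1 <= i <= l)%nat -> a i = 0) ->
  (2 * k <= l)%nat -> kvecP n a l x s -> (forall M, n = (2 * M + 1)%nat -> s <> Cvec M x) ->
  sum1 s (2 * k) = 0.
Proof. intros n a l x s k Hl Ha Hk Hs HC.
  destruct Hs as [[k' [? [? ->]]]|[->|[[K [c [? [? ->]]]]|[M [? ->]]]]].
  - apply sum1_Jvec.
  - rewrite sum1_vP. rewrite Nat.min_l by lia. apply vv_zero. intros; apply Ha; lia.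
  - rewrite (sum1_Fvec n a K c) by lia. rewrite vv_zero. ring. intros; apply Ha; lia.
  - exfalso; apply (HC M); auto. Qed.

Lemma br_H_F : forall n a x K c, n = (K + 2 * c)%nat ->
  br n (vP a x n) (Fvec n a K x) = 0.
Proof. intros. rewrite (br_Fvec n a _ K x c) by auto.
  destruct (Nat.eq_dec K n).
  - subst K. rewrite br_self. rewrite FT_PiF. ring.
  - rewrite br_PP' by lia. rewrite !sum1_vP. rewrite Nat.min_id. rewrite Nat.min_l by lia.
    rewrite FT_PiF. ring. Qed.

Lemma br_F_F : forall n a x K K' c c', n = (K + 2 * c)%nat -> n = (K' + 2 * c')%nat -> (K < K')%nat ->
  br n (Fvec n a K x) (Fvec n a K' x) = 0.
Proof. intros. rewrite (br_Fvec n a _ K' x c') by auto.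
  rewrite br_anti. rewrite (br_Fvec n a _ K x c) by auto.
  rewrite br_PP' by lia. rewrite !sum1_vP. 
  rewrite (sum1_Fvec_par n a K c x n c) by lia.
  rewrite (sum1_Fvec_par n a K c x K' ((K' - K) / 2)).
  mins. rewrite FT_PiF. ring. auto.
  assert (2 * ((K' - K) / 2) = K' - K)%nat. { replace (K' - K)%nat with (2 * (c - c'))%nat by lia.
    rewrite dbl_half. auto. } lia. Qed.

Lemma br_J_J : forall n x k k', (2 * k <= n)%nat -> br n (Jvec k' x) (Jvec k x) = 0.
Proof. intros. rewrite br_Jvec, sum1_Jvec by auto. ring. Qed.

Lemma br_H_J : forall n a x k, (2 * k <= n)%nat -> (forall i, (1 <= i <= 2 * k)%nat -> a i = 0) ->
  br n (vP a x n) (Jvec k x) = 0.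
Proof. intros. rewrite br_Jvec by auto. rewrite sum1_vP, Nat.min_l by lia. rewrite vv_zero; auto. ring. Qed.

Lemma br_F_J : forall n a x k K c, n = (K + 2 * c)%nat -> (2 * k <= K)%nat ->
  (forall i, (1 <= i <= 2 * k)%nat -> a i = 0) ->
  br n (Fvec n a K x) (Jvec k x) = 0.
Proof. intros. rewrite br_Jvec by lia. rewrite (sum1_Fvec n a K c) by lia. rewrite vv_zero; auto. ring. Qed.

Lemma kvec_br : forall n a l x s t, (l < n)%nat -> (forall i, (1 <= i <= l)%nat -> a i = 0) ->
  kvecP n a l x s -> kvecP n a l x t -> br n s t = 0.
Proof. intros n a l x s t Hl Ha Hs Ht.
  destruct Ht as [Ht|[Ht|[Ht|[M [HM ->]]]]]; [| | |apply (br_Cvec n s M x HM)].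
  all: destruct Hs as [Hs|[Hs|[Hs|[M [HM ->]]]]];
    [| | |rewrite br_anti, (br_Cvec n _ M x HM); ring].
  - destruct Ht as [k [? [? ->]]]. destruct Hs as [k' [? [? ->]]]. apply br_J_J; lia.
  - destruct Ht as [k [? [? ->]]]. subst s. apply br_H_J. lia. intros; apply Ha; lia.
  - destruct Ht as [k [? [? ->]]]. destruct Hs as [K [c [? [? ->]]]].
    apply (br_F_J n a x k K c); auto. lia. intros; apply Ha; lia.
  - subst t. destruct Hs as [k [? [? ->]]]. rewrite br_anti, br_H_J. ring. lia. intros; apply Ha; lia.
  - subst. apply br_self.
  - subst t. destruct Hs as [K [c [? [? ->]]]]. rewrite br_anti, (br_H_F n a x K c); auto. ring.
  - destruct Ht as [K [c [? [? ->]]]]. destruct Hs as [k [? [? ->]]].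
    rewrite br_anti, (br_F_J n a x k K c); auto. ring. lia. intros; apply Ha; lia.
  - destruct Ht as [K [c [? [? ->]]]]. subst s. apply (br_H_F n a x K c); auto.
  - destruct Ht as [K' [c' [? [? ->]]]]. destruct Hs as [K [c [? [? ->]]]].
    destruct (lt_eq_lt_dec K K') as [[Hlt|Heq]|Hgt].
    + apply (br_F_F n a x K K' c c'); auto.
    + subst. apply br_self.
    + rewrite br_anti, (br_F_F n a x K' K c' c); auto. ring. Qed.

Lemma kvec_sg : forall n a l x f, torus n x -> (l < n)%nat ->
  ((exists k, (1 <= k)%nat /\ (2 * k <= l)%nat /\ forall y, f y = JH k y) \/
   (forall y, f y = Hf n a y) \/
   (exists K c, (l < K)%nat /\ n = (K + 2 * c)%nat /\ forall y, f y = FT n a K y) \/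
   (exists M, n = (2 * M + 1)%nat /\ forall y, f y = CH M y)) ->
  exists s, sg n f x s /\ kvecP n a l x s.
Proof. intros n a l x f Ht Hl Hf.
  destruct Hf as [[k [? [? E]]]|[E|[[K [c [? [? E]]]]|[M [? E]]]]].
  - exists (Jvec k x). split. eapply sg_fext. intros; symmetry; apply E. apply sg_JH; auto; lia.
    left. exists k; auto.
  - exists (vP a x n). split. eapply sg_fext. intros; symmetry; apply E. apply sg_Hf; auto.
    right; left; auto.
  - exists (Fvec n a K x). split. eapply sg_fext. intros; symmetry; apply E. apply sg_FT; auto; lia.
    right; right; left. exists K, c; auto.
  - exists (Cvec M x). split. eapply sg_fext. intros; symmetry; apply E. apply sg_CH; auto.
    right; right; right. exists M; auto. Qed.

Definition lkind n a l (f : point -> R) : Prop :=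
  (exists k, (1 <= k)%nat /\ (2 * k <= l)%nat /\ forall y, f y = JH k y) \/
  (forall y, f y = Hf n a y) \/
  (exists K c, (l < K)%nat /\ n = (K + 2 * c)%nat /\ forall y, f y = FT n a K y) \/
  (exists M, n = (2 * M + 1)%nat /\ forall y, f y = CH M y).

Lemma half_bounds : forall l, (2 * (l / 2) <= l < 2 * (l / 2) + 2)%nat.
Proof. intros. pose proof (Nat.div_mod l 2 ltac:(lia)). pose proof (Nat.mod_upper_bound l 2 ltac:(lia)).
  lia. Qed.

Lemma even_or_odd : forall n, (Nat.even n = true /\ n = 2 * (n / 2))%nat \/
  (Nat.even n = false /\ n = 2 * ((n - 1) / 2) + 1)%nat.
Proof. intros. destruct (Nat.even n) eqn:E.
  - left. split; auto. apply Nat.even_spec in E. destruct E as [m ->]. rewrite dbl_half. auto.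
  - right. split; auto. assert (Nat.odd n = true) by (unfold Nat.odd; rewrite E; auto).
    apply Nat.odd_spec in H. destruct H as [m ->].
    replace (2 * m + 1 - 1)%nat with (2 * m)%nat by lia. rewrite dbl_half. auto. Qed.

Lemma liouville_kind : forall n a l f, (l < n)%nat ->
  In f (liouville_list n a l) -> lkind n a l f.
Proof. intros n a l f Hl Hin. unfold liouville_list in Hin.
  pose proof (half_bounds l) as Hb.
  destruct (even_or_odd n) as [[E Hn]|[E Hn]]; rewrite E in Hin.
  - apply in_app_or in Hin. destruct Hin as [Hin|Hin].
    + apply in_map_iff in Hin. destruct Hin as [k [<- Hk]]. apply in_seq in Hk.
      left. exists k. split; [lia|split;[lia|]]. intros; apply Jf_JH.
    + apply in_app_or in Hin. destruct Hin as [[<-|[]]|Hin].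
      * right; left; auto.
      * apply in_map_iff in Hin. destruct Hin as [k [<- Hk]]. apply in_seq in Hk.
        right; right; left. exists (2 * k)%nat, (n / 2 - k)%nat.
        split; [lia|split;[lia|]]. intros. apply (Fev_FT n a (n / 2)); lia.
  - apply in_app_or in Hin. destruct Hin as [Hin|Hin].
    + apply in_map_iff in Hin. destruct Hin as [k [<- Hk]]. apply in_seq in Hk.
      left. exists k. split; [lia|split;[lia|]]. intros; apply Jf_JH.
    + apply in_app_or in Hin. destruct Hin as [[<-|[]]|Hin].
      * right; left; auto.
      * apply in_app_or in Hin. destruct Hin as [Hin|[<-|[]]].
        -- apply in_map_iff in Hin. destruct Hin as [k [<- Hk]]. apply in_seq in Hk.
           right; right; left. exists (2 * k - 1)%nat, ((n - 1) / 2 + 1 - k)%nat.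
           split; [lia|split;[lia|]]. intros. apply (Fod_FT n a ((n - 1) / 2)); lia.
        -- right; right; right. exists ((n - 1) / 2)%nat. split; auto.
           intros; apply Cf_CH; auto. Qed.

Lemma liouville_involutive : forall n a l, (l < n)%nat -> (forall i, (1 <= i <= l)%nat -> a i = 0) ->
  involutive n (torus n) (liouville_list n a l).
Proof. intros n a l Hl Ha f g Hf Hg x Hx.
  destruct (kvec_sg n a l x f Hx Hl (liouville_kind n a l f Hl Hf)) as [s [Hs Ks]].
  destruct (kvec_sg n a l x g Hx Hl (liouville_kind n a l g Hl Hg)) as [t [Ht Kt]].
  exists (fun i => s i / x i), (fun i => t i / x i). split; auto. split; auto.
  rewrite pbr_sg by auto. apply (kvec_br n a l x); auto. Qed.

Lemma liouville_invariant : forall n a l eps, (l < n)%nat -> (forall i, (1 <= i <= l)%nat -> a i = 0) ->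
  Forall (invariant n a eps) (liouville_list n a l).
Proof. intros n a l eps Hl Ha. apply Forall_forall. intros f Hf x Hd.
  destruct (liouville_kind n a l f Hl Hf) as [[k [? [? E]]]|[E|[[K [c [? [? E]]]]|[M [? E]]]]];
    rewrite !E.
  - apply JH_inv; auto. lia. intros; apply Ha; lia.
  - apply Hf_kahan; auto.
  - apply (FT_inv n a eps x K c); auto.
  - apply CH_inv; auto. Qed.

Lemma fr_swap : forall (z : nat -> R) (c : nat -> R) (g : nat -> nat -> R) (L : list nat) n,
  sum1 (fun i => z i * fold_right Rplus 0 (map (fun k => c k * g k i) L)) n =
  fold_right Rplus 0 (map (fun k => c k * sum1 (fun i => z i * g k i) n) L).
Proof. intros z c g L n. induction L; simpl.
  - apply sum1_zero; intros; ring.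
  - rewrite <- IHL. rewrite <- sum1_scal, <- sum1_plus. apply sum1_ext; intros; ring. Qed.



Lemma fr_zero : forall (f : nat -> R) (L : list nat), (forall k, In k L -> f k = 0) ->
  fold_right Rplus 0 (map f L) = 0.
Proof. intros f L H; induction L; simpl; auto. rewrite H, IHL. ring. intros; apply H; right; auto.
  left; auto. Qed.

Lemma fr_single : forall (f : nat -> R) (L : list nat) a, In a L -> NoDup L ->
  (forall k, In k L -> k <> a -> f k = 0) -> fold_right Rplus 0 (map f L) = f a.
Proof. intros f L a; induction L; intros Hin Hnd H; simpl. destruct Hin.
  inversion Hnd; subst. destruct Hin as [<-|Hin].
  - rewrite fr_zero. ring. intros k Hk. apply H. right; auto. intro; subst; auto.
  - rewrite H, IHL; auto. ring. intros; apply H; auto. right; auto. left; auto. intro; subst; auto. Qed.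

Lemma tri_indep : forall n (dfs : list point) (z : nat -> nat -> R) (rho : nat -> nat),
  (forall a b, (a < length dfs)%nat -> (b < length dfs)%nat -> a <> b -> (rho a <= rho b)%nat ->
     sum1 (fun i => z a i * nth b dfs (fun _ => 0) i) n = 0) ->
  (forall a, (a < length dfs)%nat -> sum1 (fun i => z a i * nth a dfs (fun _ => 0) i) n <> 0) ->
  lin_indep n dfs.
Proof. intros n dfs z rho Hoff Hdiag c Hc.
  assert (Hsum : forall a, (a < length dfs)%nat ->
    fold_right Rplus 0 (map (fun k => c k * sum1 (fun i => z a i * nth k dfs (fun _ => 0) i) n)
      (seq 0 (length dfs))) = 0).
  { intros a Ha. rewrite <- fr_swap. apply sum1_zero. intros i Hi. rewrite Hc; auto. ring. }
  assert (forall N a, (a < length dfs)%nat -> (rho a < N)%nat -> c a = 0).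
  { induction N; intros a Ha HN. lia.
    specialize (Hsum a Ha). rewrite fr_single with (a := a) in Hsum.
    - apply Rmult_integral in Hsum. destruct Hsum; auto. exfalso; apply (Hdiag a Ha); auto.
    - apply in_seq; lia.
    - apply seq_NoDup.
    - intros k Hk Hne. apply in_seq in Hk.
      destruct (le_lt_dec (rho a) (rho k)).
      + rewrite Hoff; auto; try lia. ring.
      + rewrite (IHN k); try lia. ring. }
  intros k Hk. apply (H (S (rho k))); auto. Qed.

Lemma avoid : forall (L : list R) p q, p < q -> exists s, p < s < q /\ ~ In s L.
Proof. induction L as [|b L IH]; intros p q Hpq.
  - exists ((p + q) / 2). split; [lra|auto].
  - destruct (Rle_lt_dec b p) as [Hb|Hb].
    + destruct (IH p q Hpq) as [s [Hs Hn]]. exists s. split; auto. intros [E|E]; [lra|auto].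
    + destruct (IH p (Rmin b q) ltac:(unfold Rmin; destruct (Rle_dec b q); lra)) as [s [Hs Hn]].
      exists s. split. unfold Rmin in Hs; destruct (Rle_dec b q); lra.
      intros [E|E]; [subst; unfold Rmin in Hs; destruct (Rle_dec s q); lra|auto]. Qed.

Lemma vv_upd : forall a x c t k, (1 <= c)%nat ->
  vv a (upd x c t) k = vv a x k + (if Nat.leb c k then a c * (t - x c) else 0).
Proof. intros. induction k.
  - rewrite !vv_0. destruct (Nat.leb_spec c 0); [lia|ring].
  - rewrite !vv_S, IHk. unfold upd. destruct (Nat.eqb_spec (S k) c).
    + subst. destruct (Nat.leb_spec (S k) (S k)), (Nat.leb_spec (S k) k); try lia. ring.
    + destruct (Nat.leb_spec c (S k)), (Nat.leb_spec c k); try lia; ring. Qed.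

Lemma Forall2_nth' : forall {A0 B0} (R : A0 -> B0 -> Prop) l1 l2 d1 d2, length l1 = length l2 ->
  (forall b, (b < length l1)%nat -> R (nth b l1 d1) (nth b l2 d2)) -> Forall2 R l1 l2.
Proof. intros A B R l1; induction l1; intros l2 d1 d2 Hl H; destruct l2; simpl in *; try lia.
  constructor. constructor. apply (H 0%nat); lia.
  apply (IHl1 l2 d1 d2); [lia|]. intros b0 Hb0. apply (H (S b0)); lia. Qed.

Lemma nth_map_seq : forall {A} (f : nat -> A) s len b d, (b < len)%nat ->
  nth b (map f (seq s len)) d = f (s + b)%nat.
Proof. intros. rewrite nth_indep with (d' := f 0%nat) by (rewrite length_map, length_seq; auto).
  rewrite map_nth, seq_nth; auto. Qed.

Lemma nth_ms_app1 : forall {A} (f : nat -> A) s len rest b d, (b < len)%nat ->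
  nth b (map f (seq s len) ++ rest) d = f (s + b)%nat.
Proof. intros. rewrite app_nth1 by (rewrite length_map, length_seq; auto). apply nth_map_seq; auto. Qed.

Lemma nth_ms_app2 : forall {A} (f : nat -> A) s len rest b d, (len <= b)%nat ->
  nth b (map f (seq s len) ++ rest) d = nth (b - len) rest d.
Proof. intros. rewrite app_nth2 by (rewrite length_map, length_seq; auto).
  rewrite length_map, length_seq; auto. Qed.

Lemma indep_vectors : forall n x (fs : list (point -> R)) (V : nat -> nat -> R)
  (zeta : nat -> nat -> R) (rho : nat -> nat), torus n x ->
  (forall b, (b < length fs)%nat -> sg n (nth b fs (fun _ => 0)) x (V b)) ->
  (forall a b, (a < length fs)%nat -> (b < length fs)%nat -> a <> b -> (rho a <= rho b)%nat ->
     sum1 (fun i => zeta a i * V b i) n = 0) ->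
  (forall a, (a < length fs)%nat -> sum1 (fun i => zeta a i * V a i) n <> 0) ->
  indep_at n fs x.
Proof. intros n x fs V zeta rho Ht Hsg Hoff Hdiag.
  exists (map (fun b => fun i => V b i / x i) (seq 0 (length fs))). split.
  - apply (Forall2_nth' _ _ _ (fun _ => 0) (fun _ => 0)). rewrite length_map, length_seq; auto.
    intros b Hb. rewrite nth_map_seq by auto. simpl. apply Hsg; auto.
  - apply (tri_indep n _ (fun a i => zeta a i * x i) rho).
    + rewrite length_map, length_seq. intros a b Ha Hb Hne Hr. rewrite nth_map_seq by auto.
      rewrite <- (Hoff a b); auto. apply sum1_ext; intros. simpl. field. apply Ht; auto.
    + rewrite length_map, length_seq. intros a Ha. rewrite nth_map_seq by auto.
      intro E. apply (Hdiag a Ha). rewrite <- E. apply sum1_ext; intros. simpl. field. apply Ht; auto. Qed.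

Lemma perturb : forall n a y c delta (idx : list nat), torus n y -> (1 <= c <= n)%nat -> a c <> 0 ->
  0 < delta -> (forall j, In j idx -> (c <= j)%nat) ->
  exists t, Rabs (t - y c) < delta /\ torus n (upd y c t) /\
    forall j, In j idx -> vv a (upd y c t) j <> 0.
Proof. intros n a y c delta idx Hy Hc Ha Hd Hidx.
  destruct (avoid (0 :: map (fun j => y c - vv a y j / a c) idx) (y c - delta) (y c + delta))
    as [t [Ht Hn]]. lra.
  exists t. split. apply Rabs_def1; lra. split.
  - intros i Hi. unfold upd. destruct (Nat.eqb_spec i c). intro E; apply Hn; left; auto.
    apply Hy; auto.
  - intros j Hj. rewrite vv_upd by lia. destruct (Nat.leb_spec c j); [|specialize (Hidx j Hj); lia].
    intro E. apply Hn. right. apply in_map_iff. exists j. split; auto. field_simplify; auto.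
    apply (Rmult_eq_reg_r (a c)); auto. field_simplify; auto. lra. Qed.

Lemma sumc_single : forall f lo c p, (lo <= p < lo + c)%nat ->
  (forall t, (lo <= t < lo + c)%nat -> t <> p -> f t = 0) -> sumc f lo c = f p.
Proof. intros f lo c; revert lo; induction c; intros lo p Hp H; simpl. lia.
  destruct (Nat.eq_dec lo p).
  - subst. rewrite sumc_zero. ring. intros; apply H; lia.
  - rewrite (IHc (S lo) p); [|lia|intros; apply H; lia]. rewrite H; [ring|lia|auto]. Qed.

Lemma pairs_odd : forall K c s, (s < c)%nat -> pairs K c (K + 1 + 2 * s) = -1.
Proof. intros. unfold pairs. rewrite (sumc_single _ 0 c s); [|lia|].
  unfold vE. dec; try lia; ring.
  intros t Ht Hne. unfold vE. dec; try lia; ring. Qed.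

Lemma pairs_even : forall K c s, (s < c)%nat -> pairs K c (K + 2 + 2 * s) = 1.
Proof. intros. unfold pairs. rewrite (sumc_single _ 0 c s); [|lia|].
  unfold vE. dec; try lia; ring.
  intros t Ht Hne. unfold vE. dec; try lia; ring. Qed.

Lemma vP_in : forall a x k i, (i <= k)%nat -> vP a x k i = a i * x i.
Proof. intros. unfold vP. dec; [auto|lia]. Qed.

Lemma dot1 : forall n p al (V : nat -> R), (1 <= p <= n)%nat ->
  sum1 (fun i => al * vE p i * V i) n = al * V p.
Proof. intros. rewrite <- (sum1_vE p n V) by auto. rewrite <- sum1_scal.
  apply sum1_ext; intros; ring. Qed.

Lemma dot2 : forall n p q al be (V : nat -> R), (1 <= p <= n)%nat -> (1 <= q <= n)%nat ->
  sum1 (fun i => (al * vE p i - be * vE q i) * V i) n = al * V p - be * V q.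
Proof. intros. rewrite <- (dot1 n p al V), <- (dot1 n q be V) by auto. rewrite <- sum1_minus.
  apply sum1_ext; intros; ring. Qed.

Lemma prodratio_nz : forall n x p q lo c, torus n x ->
  (forall t, (lo <= t < lo + c)%nat -> (1 <= p t <= n)%nat /\ (1 <= q t <= n)%nat) ->
  prod_cnt (fun t => x (p t) / x (q t)) lo c <> 0.
Proof. intros. apply prod_cnt_nz. intros j Hj. destruct (H0 j Hj).
  unfold Rdiv. apply Rmult_integral_contrapositive_currified. apply H; auto.
  apply Rinv_neq_0_compat, H; auto. Qed.

Lemma JH_nz : forall n k x, torus n x -> (2 * k <= n)%nat -> JH k x <> 0.
Proof. intros. unfold JH. apply (prodratio_nz n x (fun t => 2*t+1)%nat (fun t => 2*t+2)%nat); auto.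
  intros; lia. Qed.

Lemma PiF_nz : forall n K x, torus n x -> (K <= n)%nat -> PiF n K x <> 0.
Proof. intros. unfold PiF. apply (prodratio_nz n x (fun t => K + 2 + 2*t)%nat (fun t => K + 1 + 2*t)%nat); auto.
  intros t Ht. assert (2 * ((n - K) / 2) <= n - K)%nat by (apply Nat.Div0.mul_div_le). lia. Qed.

Lemma CH_nz : forall n M x, torus n x -> n = (2 * M + 1)%nat -> CH M x <> 0.
Proof. intros. unfold CH. apply Rmult_integral_contrapositive_currified. apply H; lia.
  apply (prodratio_nz n x (fun t => 2*t+3)%nat (fun t => 2*t+2)%nat); auto. intros; lia. Qed.

Lemma Cvec_pair : forall n M x q, n = (2 * M + 1)%nat -> (1 <= q)%nat -> (S q <= n)%nat ->
  (Cvec M x q = CH M x \/ Cvec M x q = - CH M x) /\ Cvec M x (S q) = - Cvec M x q.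
Proof. intros. unfold Cvec.
  destruct (Nat.eq_dec q 1).
  - subst. rewrite pairs_low by lia. replace 2%nat with (1 + 1 + 2 * 0)%nat by lia.
    rewrite pairs_odd by lia. unfold vE. simpl. split; [left|]; ring.
  - destruct (Nat.even q) eqn:E.
    + apply Nat.even_spec in E. destruct E as [s ->].
      replace (2 * s)%nat with (1 + 1 + 2 * (s - 1))%nat by lia. rewrite pairs_odd by lia.
      replace (S (1 + 1 + 2 * (s - 1)))%nat with (1 + 2 + 2 * (s - 1))%nat by lia.
      rewrite pairs_even by lia. unfold vE. dec; try lia. split; [right|]; ring.
    + assert (Nat.odd q = true) by (unfold Nat.odd; rewrite E; auto).
      apply Nat.odd_spec in H2. destruct H2 as [s ->].
      replace (2 * s + 1)%nat with (1 + 2 + 2 * (s - 1))%nat by lia. rewrite pairs_even by lia.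
      replace (S (1 + 2 + 2 * (s - 1)))%nat with (1 + 1 + 2 * s)%nat by lia.
      rewrite pairs_odd by lia. unfold vE. dec; try lia. split; [left|]; ring. Qed.

Ltac decb := repeat match goal with
  | |- context [Nat.ltb ?a ?b] => destruct (Nat.ltb_spec a b)
  | |- context [Nat.eqb ?a ?b] => destruct (Nat.eqb_spec a b)
  | |- context [Nat.leb ?a ?b] => destruct (Nat.leb_spec a b) end.

Lemma w_nz : forall n a x l, torus n x -> a (S l) <> 0 -> (l < n)%nat -> a (S l) * x (S l) <> 0.
Proof. intros. apply Rmult_integral_contrapositive_currified; auto. apply H; lia. Qed.

Lemma liouville_indep_even : forall n a l m x, n = (2 * m)%nat -> (l < n)%nat ->
  (forall i, (1 <= i <= l)%nat -> a i = 0) -> a (S l) <> 0 -> torus n x ->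
  (forall j, (S l <= j <= n)%nat -> vv a x j <> 0) ->
  indep_at n (liouville_list n a l) x.
Proof. intros n a l m x Hn Hl Ha Hal Ht Hv.
  pose proof (half_bounds l) as Hb.
  unfold liouville_list. replace (Nat.even n) with true by (symmetry; apply Nat.even_spec; exists m; lia).
  replace (n / 2)%nat with m by (subst; rewrite dbl_half; auto).
  set (lam := (l / 2)%nat) in *. set (cnt := (m - 1 - lam)%nat).
  set (w := fun j => a j * x j).
  replace ((Hf n a :: nil) ++ map (Fev n a) (seq (S lam) cnt)) with (Hf n a :: map (Fev n a) (seq (S lam) cnt)) by reflexivity.
  assert (Hlen : length (map Jf (seq 1 lam) ++ Hf n a :: map (Fev n a) (seq (S lam) cnt)) = (lam + S cnt)%nat).
  { rewrite length_app, length_map, length_seq. simpl. rewrite length_map, length_seq. auto. }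
  apply (indep_vectors n x (map Jf (seq 1 lam) ++ Hf n a :: map (Fev n a) (seq (S lam) cnt))
    (fun b => if Nat.ltb b lam then Jvec (S b) x else if Nat.eqb b lam then vP a x n else Fvec n a (2 * b) x)
    (fun b i => if Nat.ltb b lam then vE (2 * b + 2) i else if Nat.eqb b lam then vE (S l) i
       else (w (2 * b + 1)%nat * vE (S l) i - w (S l) * vE (2 * b + 1) i))
    (fun b => if Nat.ltb b lam then (2 * n + lam - b)%nat else if Nat.eqb b lam then (2 * n)%nat else b));
    auto.
  -
    intros b Hb0. assert (Hb' : (b < lam + S cnt)%nat) by (rewrite <- Hlen; exact Hb0). decb.
    + rewrite nth_ms_app1 by auto. eapply sg_fext. intros; symmetry; apply Jf_JH. apply sg_JH; auto; lia.
    + subst b. rewrite nth_ms_app2 by lia. rewrite Nat.sub_diag. simpl. apply sg_Hf; auto.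
    + rewrite nth_ms_app2 by lia. replace (b - lam)%nat with (S (b - S lam)) by lia. simpl.
      rewrite nth_map_seq by lia. replace (S lam + (b - S lam))%nat with b by lia.
      eapply sg_fext. intros; symmetry; apply (Fev_FT n a m); lia. apply sg_FT; auto; lia.
  -
    intros p q Hp Hq Hne Hr. rewrite Hlen in Hp, Hq. revert Hr. decb; intros Hr; try lia.
    + rewrite (sum1_vE (2 * p + 2)) by lia. unfold Jvec. rewrite pairs_high by lia. ring.
    + rewrite (sum1_vE (S l)) by lia. unfold Jvec. rewrite pairs_high by lia. ring.
    + rewrite dot2 by lia. unfold Jvec. rewrite !pairs_high by lia. ring.
    + rewrite dot2 by lia. rewrite !vP_in by lia. unfold w. ring.
    + rewrite dot2 by lia. unfold Fvec. rewrite !vP_in by lia. rewrite !pairs_low by lia. unfold w. ring.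
  -
    intros p Hp. rewrite Hlen in Hp. decb; try lia.
    + rewrite (sum1_vE (2 * p + 2)) by lia. unfold Jvec.
      replace (2 * p + 2)%nat with (0 + 2 + 2 * p)%nat by lia. rewrite pairs_even by lia.
      pose proof (JH_nz n (S p) x Ht ltac:(lia)) as HJ. intro E; apply HJ; lra.
    + rewrite (sum1_vE (S l)) by lia. rewrite vP_in by lia. apply w_nz with n; auto.
    + rewrite dot2 by lia. unfold Fvec. rewrite vP_in by lia. rewrite pairs_low by lia.
      unfold vP. decb; try lia.
      replace (2 * p + 1)%nat with (2 * p + 1 + 2 * 0)%nat by lia. rewrite pairs_odd.
      2:{ rewrite (FT_c n (2 * p) (m - p)) by lia. lia. }
      rewrite FT_PiF. unfold w.
      replace (a (2 * p + 1 + 2 * 0)%nat * x (2 * p + 1 + 2 * 0)%nat) with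
        (vv a x (S (2 * p)) - vv a x (2 * p)) by (rewrite vv_S; replace (S (2*p)) with (2*p+1+2*0)%nat by lia; ring).
      pose proof (PiF_nz n (2 * p) x Ht ltac:(lia)) as HP. pose proof (w_nz n a x l Ht Hal Hl) as HW.
      pose proof (Hv (S (2 * p)) ltac:(lia)) as HV.
      intro E. assert (EE : a (S l) * x (S l) * (PiF n (2 * p) x * vv a x (S (2 * p))) = 0) by (rewrite <- E; ring).
      apply Rmult_integral in EE. destruct EE as [EE|EE]; [auto|].
      apply Rmult_integral in EE. destruct EE; auto. Qed.

Lemma liouville_indep_odd : forall n a l M x, n = (2 * M + 1)%nat -> (S l < n)%nat ->
  (forall i, (1 <= i <= l)%nat -> a i = 0) -> a (S l) <> 0 -> torus n x ->
  (forall j, (S l <= j <= n)%nat -> vv a x j <> 0) ->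
  indep_at n (liouville_list n a l) x.
Proof. intros n a l M x Hn Hl Ha Hal Ht Hv.
  pose proof (half_bounds l) as Hb.
  unfold liouville_list. replace (Nat.even n) with false.
  2:{ symmetry. destruct (Nat.even n) eqn:E; auto. apply Nat.even_spec in E. destruct E. lia. }
  replace ((n - 1) / 2)%nat with M by (subst; replace (2 * M + 1 - 1)%nat with (2 * M)%nat by lia; rewrite dbl_half; auto).
  set (lam := (l / 2)%nat) in *. set (cnt := (M - 1 - lam)%nat).
  set (w := fun j => a j * x j).
  set (fs := map Jf (seq 1 lam) ++ Hf n a :: map (Fod n a) (seq (S (S lam)) cnt) ++ Cf n :: nil).
  change (indep_at n fs x).
  assert (Hlen : length fs = (lam + S cnt + 1)%nat).
  { unfold fs. rewrite length_app, length_map, length_seq. simpl. rewrite length_app, length_map, length_seq. simpl. lia. }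
  apply (indep_vectors n x fs
    (fun b => if Nat.ltb b lam then Jvec (S b) x else if Nat.eqb b lam then vP a x n
       else if Nat.ltb b (lam + S cnt) then Fvec n a (2 * b + 1) x else Cvec M x)
    (fun b i => if Nat.ltb b lam then vE (2 * b + 2) i else if Nat.eqb b lam then vE (S l) i
       else if Nat.ltb b (lam + S cnt) then (w (2 * b + 2)%nat * vE (S l) i - w (S l) * vE (2 * b + 2) i)
       else (w (S (S l)) * vE (S l) i - w (S l) * vE (S (S l)) i))
    (fun b => if Nat.ltb b lam then (2 * n + lam - b)%nat else if Nat.eqb b lam then (2 * n)%nat
       else if Nat.ltb b (lam + S cnt) then b else 0%nat)); auto.
  -
    intros b Hb0. rewrite Hlen in Hb0. unfold fs. decb; try lia.
    + rewrite nth_ms_app1 by auto. eapply sg_fext. intros; symmetry; apply Jf_JH. apply sg_JH; auto; lia.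
    + subst b. rewrite nth_ms_app2 by lia. rewrite Nat.sub_diag. simpl. apply sg_Hf; auto.
    + rewrite nth_ms_app2 by lia. replace (b - lam)%nat with (S (b - S lam)) by lia. simpl.
      rewrite nth_ms_app1 by lia. replace (S (S lam) + (b - S lam))%nat with (S b) by lia.
      eapply sg_fext. intros; symmetry; apply (Fod_FT n a M); lia.
      replace (2 * S b - 1)%nat with (2 * b + 1)%nat by lia. apply sg_FT; auto; lia.
    + rewrite nth_ms_app2 by lia. replace (b - lam)%nat with (S (b - S lam)) by lia. simpl.
      rewrite nth_ms_app2 by lia. replace (b - S lam - cnt)%nat with 0%nat by lia. simpl.
      eapply sg_fext. intros; symmetry; apply (Cf_CH n M); lia. apply sg_CH; auto.
  -
    intros p q Hp Hq Hne Hr. rewrite Hlen in Hp, Hq. revert Hr. decb; intros Hr; try lia.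
    + rewrite (sum1_vE (2 * p + 2)) by lia. unfold Jvec. rewrite pairs_high by lia. ring.
    + rewrite (sum1_vE (S l)) by lia. unfold Jvec. rewrite pairs_high by lia. ring.
    + rewrite dot2 by lia. unfold Jvec. rewrite !pairs_high by lia. ring.
    + rewrite dot2 by lia. rewrite !vP_in by lia. unfold w. ring.
    + rewrite dot2 by lia. unfold Fvec. rewrite !vP_in by lia. rewrite !pairs_low by lia. unfold w. ring.
    + rewrite dot2 by lia. unfold Jvec. rewrite !pairs_high by lia. ring.
    + rewrite dot2 by lia. rewrite !vP_in by lia. unfold w. ring.
    + rewrite dot2 by lia. unfold Fvec. rewrite !vP_in by lia. rewrite !pairs_low by lia. unfold w. ring.
  -
    intros p Hp. rewrite Hlen in Hp. decb; try lia.
    + rewrite (sum1_vE (2 * p + 2)) by lia. unfold Jvec.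
      replace (2 * p + 2)%nat with (0 + 2 + 2 * p)%nat by lia. rewrite pairs_even by lia.
      pose proof (JH_nz n (S p) x Ht ltac:(lia)) as HJ. intro E; apply HJ; lra.
    + rewrite (sum1_vE (S l)) by lia. rewrite vP_in by lia. apply w_nz with n; auto; lia.
    + rewrite dot2 by lia. unfold Fvec. rewrite vP_in by lia. rewrite pairs_low by lia.
      unfold vP. decb; try lia.
      replace (2 * p + 2)%nat with (2 * p + 1 + 1 + 2 * 0)%nat by lia. rewrite pairs_odd.
      2:{ rewrite (FT_c n (2 * p + 1) (M - p)) by lia. lia. }
      rewrite FT_PiF. unfold w.
      replace (a (2 * p + 1 + 1 + 2 * 0)%nat * x (2 * p + 1 + 1 + 2 * 0)%nat) with
        (vv a x (S (2 * p + 1)) - vv a x (2 * p + 1)) by (rewrite vv_S; replace (S (2*p+1)) with (2*p+1+1+2*0)%nat by lia; ring).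
      pose proof (PiF_nz n (2 * p + 1) x Ht ltac:(lia)) as HP. pose proof (w_nz n a x l Ht Hal ltac:(lia)) as HW.
      pose proof (Hv (S (2 * p + 1)) ltac:(lia)) as HV.
      intro E. assert (EE : a (S l) * x (S l) * (PiF n (2 * p + 1) x * vv a x (S (2 * p + 1))) = 0) by (rewrite <- E; ring).
      apply Rmult_integral in EE. destruct EE as [EE|EE]; [auto|].
      apply Rmult_integral in EE. destruct EE; auto.
    + rewrite dot2 by lia.
      destruct (Cvec_pair n M x (S l) Hn ltac:(lia) ltac:(lia)) as [HC1 HC2].
      rewrite HC2. unfold w.
      replace (a (S (S l)) * x (S (S l)) + a (S l) * x (S l)) with (vv a x (S (S l))).
      2:{ rewrite !vv_S. rewrite vv_zero; auto. ring. }
      pose proof (CH_nz n M x Ht Hn) as HCH. pose proof (Hv (S (S l)) ltac:(lia)) as HV.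
      replace (a (S (S l)) * x (S (S l)) * Cvec M x (S l) - a (S l) * x (S l) * - Cvec M x (S l))
        with (Cvec M x (S l) * (a (S (S l)) * x (S (S l)) + a (S l) * x (S l))) by ring.
      replace (a (S (S l)) * x (S (S l)) + a (S l) * x (S l)) with (vv a x (S (S l))).
      2:{ rewrite !vv_S. rewrite vv_zero; auto. ring. }
      apply Rmult_integral_contrapositive_currified; auto.
      destruct HC1 as [E|E]; rewrite E; auto. apply Ropp_neq_0_compat; auto. Qed.

Lemma liouville_func_indep : forall n a l, (l < n)%nat ->
  (forall i, (1 <= i <= l)%nat -> a i = 0) -> a (S l) <> 0 ->
  ~ (Nat.odd n = true /\ l = (n - 1)%nat) ->
  func_indep n (torus n) (liouville_list n a l).
Proof. intros n a l Hl Ha Hal Hodd y Hy delta Hd.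
  destruct (perturb n a y (S l) delta (seq (S l) (n - l)) Hy ltac:(lia) Hal Hd) as [t [Htd [Ht Hv]]].
  { intros j Hj. apply in_seq in Hj. lia. }
  exists (upd y (S l) t). split; auto. split.
  - intros i Hi. unfold upd. destruct (Nat.eqb_spec i (S l)). subst; auto.
    rewrite Rminus_diag, Rabs_R0. auto.
  - assert (Hv' : forall j, (S l <= j <= n)%nat -> vv a (upd y (S l) t) j <> 0).
    { intros j Hj. apply Hv. apply in_seq. lia. }
    destruct (even_or_odd n) as [[E Hn]|[E Hn]].
    + apply (liouville_indep_even n a l (n / 2)); auto.
    + apply (liouville_indep_odd n a l ((n - 1) / 2)); auto.
      destruct (Nat.eq_dec l (n - 1)); [|lia]. exfalso. apply Hodd. split; auto.
      unfold Nat.odd. rewrite E. auto. Qed.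

Definition gratio s (y : point) := y s / y (S s).
Definition gPsiL n a l (y : point) := y l * (Hf n a y - vv a y (S l)) / y (S l).
Definition gPhi n a s (y : point) := (Hf n a y - vv a y (s - 1)) * vv a y s / y s.
Definition gPsiR a r (y : point) := y (S r) * vv a y (r - 1) / y r.
Definition gXX l r (y : point) := y l * y (S r).

Definition vratio s (x : point) : nat -> R := fun i => x s / x (S s) * (vE s i - vE (S s) i).
Definition vPsiL n a l (x : point) : nat -> R := fun i =>
  gPsiL n a l x * (vE l i - vE (S l) i) + x l / x (S l) * (vP a x n i - vP a x (S l) i).
Definition vPhi n a s (x : point) : nat -> R := fun i =>
  / x s * ((Hf n a x - vv a x (s - 1)) * vP a x s i + vv a x s * (vP a x n i - vP a x (s - 1) i))
  - gPhi n a s x * vE s i.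
Definition vPsiR a r (x : point) : nat -> R := fun i =>
  gPsiR a r x * (vE (S r) i - vE r i) + x (S r) / x r * vP a x (r - 1) i.
Definition vXX l r (x : point) : nat -> R := fun i => gXX l r x * (vE l i + vE (S r) i).

Lemma sg_gratio : forall n s x, torus n x -> (1 <= S s <= n)%nat -> sg n (gratio s) x (vratio s x).
Proof. intros. unfold gratio, vratio. apply sg_ratio; auto. Qed.

Lemma sg_gPsiL : forall n a l x, torus n x -> (S l <= n)%nat -> sg n (gPsiL n a l) x (vPsiL n a l x).
Proof. intros. unfold gPsiL. eapply sg_ext.
  apply sg_div; auto. apply sg_mult. apply sg_coord; auto. apply sg_minus. apply sg_Hf; auto.
  apply sg_vv; auto. apply sg_coord; auto. all: try match goal with |- _ ?i <> 0 => exact (H i ltac:(lia)) end.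
  intros i Hi. unfold vPsiL, gPsiL. simpl. field. apply H; lia. Qed.

Lemma sg_gPhi : forall n a s x, torus n x -> (1 <= s <= n)%nat -> sg n (gPhi n a s) x (vPhi n a s x).
Proof. intros. unfold gPhi. eapply sg_ext.
  apply sg_div; auto. apply sg_mult. apply sg_minus. apply sg_Hf; auto.
  apply sg_vv; auto. apply sg_vv; auto. apply sg_coord; auto. all: try match goal with |- _ ?i <> 0 => exact (H i ltac:(lia)) end.
  intros i Hi. unfold vPhi, gPhi. simpl. field. apply H; lia. Qed.

Lemma sg_gPsiR : forall n a r x, torus n x -> (1 <= r <= n)%nat -> sg n (gPsiR a r) x (vPsiR a r x).
Proof. intros. unfold gPsiR. eapply sg_ext.
  apply sg_div; auto. apply sg_mult. apply sg_coord; auto.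
  apply sg_vv; auto. apply sg_coord; auto. all: try match goal with |- _ ?i <> 0 => exact (H i ltac:(lia)) end.
  intros i Hi. unfold vPsiR, gPsiR. simpl. field. apply H; lia. Qed.

Lemma sg_gXX : forall n l r x, torus n x -> sg n (gXX l r) x (vXX l r x).
Proof. intros. unfold gXX. eapply sg_ext.
  apply sg_mult; apply sg_coord; auto.
  intros i Hi. unfold vXX, gXX. simpl. ring. Qed.

Lemma fi_br : forall n a x s, torus n x ->
  sum1 (fun i => s i / x i * vfield n a x i) n = br n s (vP a x n).
Proof. intros. rewrite br_T. apply sum1_ext. intros i Hi. unfold vfield.
  rewrite Tq_vP by lia. rewrite !Nat.min_l by lia. field. apply H; auto. Qed.

Lemma br_EPn : forall n a x s, (1 <= s <= n)%nat ->
  br n (vE s) (vP a x n) = vv a x n - vv a x s - vv a x (s - 1).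
Proof. intros. rewrite br_EP by lia. rewrite !Nat.min_l by lia. auto. Qed.

Lemma br_PPn : forall n a x k, (k <= n)%nat -> br n (vP a x k) (vP a x n) = vv a x k * (vv a x n - vv a x k).
Proof. intros. apply br_PP; lia. Qed.

Lemma br_minusl : forall n p q r, br n (fun i => p i - q i) r = br n p r - br n q r.
Proof. intros. rewrite br_anti, br_minusr, (br_anti n p r), (br_anti n q r). ring. Qed.

Lemma fi_ratio : forall n a x s, (1 <= s)%nat -> (S s <= n)%nat -> a s = 0 -> a (S s) = 0 ->
  br n (vratio s x) (vP a x n) = 0.
Proof. intros. unfold vratio. rewrite br_scall, br_minusl.
  rewrite !br_EPn by lia. replace (S s - 1)%nat with s by lia.
  rewrite vv_S. rewrite H2. replace (vv a x s) with (vv a x (s - 1)). ring.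
  replace s with (S (s - 1)) at 2 by lia. rewrite vv_S.
  replace (S (s - 1)) with s by lia. rewrite H1. ring. Qed.

Lemma fi_PsiL : forall n a l x, (1 <= l)%nat -> (S l <= n)%nat -> (forall i, (1 <= i <= l)%nat -> a i = 0) ->
  br n (vPsiL n a l x) (vP a x n) = 0.
Proof. intros. unfold vPsiL. rewrite br_addl, !br_scall, !br_minusl, !br_EPn by lia.
  rewrite br_self, br_PPn by lia. replace (S l - 1)%nat with l by lia.
  rewrite (vv_zero a x l), (vv_zero a x (l - 1)) by (intros; apply H1; lia).
  unfold gPsiL, Hf. unfold Rdiv. ring. Qed.

Lemma fi_Phi : forall n a s x, (1 <= s <= n)%nat -> br n (vPhi n a s x) (vP a x n) = 0.
Proof. intros. unfold vPhi. rewrite br_minusl, !br_scall, br_addl, !br_scall, br_minusl.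
  rewrite br_self, !br_PPn by lia. rewrite br_EPn by lia.
  unfold gPhi, Hf. unfold Rdiv. ring. Qed.

Lemma fi_PsiR : forall n a r x, (1 <= r)%nat -> (S r <= n)%nat -> vv a x (S r) = vv a x n ->
  br n (vPsiR a r x) (vP a x n) = 0.
Proof. intros. unfold vPsiR. rewrite br_addl, !br_scall, !br_minusl, !br_EPn by lia.
  rewrite br_PPn by lia. replace (S r - 1)%nat with r by lia. rewrite H1.
  unfold gPsiR. unfold Rdiv. ring. Qed.

Lemma fi_XX : forall n a l r x, (1 <= l)%nat -> (S r <= n)%nat -> (l <= r)%nat ->
  vv a x l = 0 -> vv a x (l - 1) = 0 -> vv a x r = vv a x n -> vv a x (S r) = vv a x n ->
  br n (vXX l r x) (vP a x n) = 0.
Proof. intros. unfold vXX. rewrite br_scall, br_addl, !br_EPn by lia.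
  replace (S r - 1)%nat with r by lia. rewrite H2, H3, H4, H5. ring. Qed.

Lemma Dk_eq : forall n a eps x k k', vv a x k = vv a x k' -> Dk n a eps x k = Dk n a eps x k'.
Proof. intros. unfold Dk. rewrite H. auto. Qed.

Lemma inv_ratio : forall n a eps x s, kdom n a eps x -> (1 <= s)%nat -> (S s <= n)%nat ->
  vv a x (S s) = vv a x (s - 1) -> gratio s (kahan n a eps x) = gratio s x.
Proof. intros. unfold gratio. rewrite kahan_ratio' by auto.
  rewrite (Dk_eq n a eps x (S s) (s - 1)) by auto.
  pose proof (kdom_D n a eps x (s - 1) H ltac:(lia)). field. split; auto. destruct H as [Ht _]; apply Ht; lia. Qed.

Lemma inv_Phi : forall n a eps x s, kdom n a eps x -> (1 <= s <= n)%nat ->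
  gPhi n a s (kahan n a eps x) = gPhi n a s x.
Proof. intros. unfold gPhi. rewrite uu_kahan, vv_kahan, kahan_eq by (auto; lia).
  pose proof (kdom_D n a eps x (s - 1) H ltac:(lia)). pose proof (kdom_D n a eps x s H ltac:(lia)).
  pose proof (kdom_D n a eps x 0 H ltac:(lia)). pose proof (kdom_D n a eps x n H ltac:(lia)).
  destruct H as [Ht _]. pose proof (Ht s H0).
  field. repeat split; auto. Qed.

Lemma inv_PsiL : forall n a eps x l, kdom n a eps x -> (1 <= l)%nat -> (S l <= n)%nat ->
  (forall i, (1 <= i <= l)%nat -> a i = 0) ->
  gPsiL n a l (kahan n a eps x) = gPsiL n a l x.
Proof. intros. unfold gPsiL. rewrite uu_kahan by (auto; lia). rewrite !kahan_eq by lia.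
  replace (S l - 1)%nat with l by lia.
  rewrite (Dk_eq n a eps x l 0), (Dk_eq n a eps x (l - 1) 0) by (rewrite vv_zero, vv_0; auto; intros; apply H2; lia).
  pose proof (kdom_D n a eps x (S l) H ltac:(lia)).
  pose proof (kdom_D n a eps x 0 H ltac:(lia)). pose proof (kdom_D n a eps x n H ltac:(lia)).
  destruct H as [Ht _]. pose proof (Ht (S l) ltac:(lia)). pose proof (Ht l ltac:(lia)).
  field. repeat split; auto. Qed.

Lemma inv_PsiR : forall n a eps x r, kdom n a eps x -> (1 <= r)%nat -> (S r <= n)%nat ->
  vv a x r = vv a x n -> vv a x (S r) = vv a x n ->
  gPsiR a r (kahan n a eps x) = gPsiR a r x.
Proof. intros. unfold gPsiR. rewrite vv_kahan by (auto; lia). rewrite !kahan_eq by lia.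
  replace (S r - 1)%nat with r by lia.
  rewrite (Dk_eq n a eps x (S r) n), (Dk_eq n a eps x r n) by auto.
  pose proof (kdom_D n a eps x (r - 1) H ltac:(lia)).
  pose proof (kdom_D n a eps x 0 H ltac:(lia)). pose proof (kdom_D n a eps x n H ltac:(lia)).
  destruct H as [Ht _]. pose proof (Ht r ltac:(lia)). pose proof (Ht (S r) ltac:(lia)).
  field. repeat split; auto. Qed.

Lemma inv_XX : forall n a eps x l r, kdom n a eps x -> (1 <= l)%nat -> (S r <= n)%nat -> (l <= r)%nat ->
  vv a x l = 0 -> vv a x (l - 1) = 0 -> vv a x r = vv a x n -> vv a x (S r) = vv a x n ->
  gXX l r (kahan n a eps x) = gXX l r x.
Proof. intros. unfold gXX. rewrite !kahan_eq by lia.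
  replace (S r - 1)%nat with r by lia.
  rewrite (Dk_eq n a eps x (S r) n), (Dk_eq n a eps x r n) by auto.
  rewrite (Dk_eq n a eps x l 0), (Dk_eq n a eps x (l - 1) 0) by (rewrite vv_0; auto).
  pose proof (kdom_D n a eps x 0 H ltac:(lia)). pose proof (kdom_D n a eps x n H ltac:(lia)).
  field. split; auto. Qed.

Definition gfun n a l r s : point -> R :=
  if Nat.ltb s l then gratio s
  else if Nat.eqb s l then (if Nat.leb (S (S l)) r then gPsiL n a l else if Nat.ltb r n then gXX l r else Hf n a)
  else if Nat.eqb s (S l) then Hf n a
  else if Nat.ltb s r then gPhi n a s
  else if Nat.eqb s r then gPsiR a r
  else gratio s.

Definition gvec n a l r s (x : point) : nat -> R :=
  if Nat.ltb s l then vratio s x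
  else if Nat.eqb s l then (if Nat.leb (S (S l)) r then vPsiL n a l x else if Nat.ltb r n then vXX l r x else vP a x n)
  else if Nat.eqb s (S l) then vP a x n
  else if Nat.ltb s r then vPhi n a s x
  else if Nat.eqb s r then vPsiR a r x
  else vratio s x.

Lemma vv_high : forall a x r n k, (forall i, (r < i <= n)%nat -> a i = 0) -> (r <= k <= n)%nat ->
  vv a x k = vv a x n.
Proof. intros. symmetry. apply vv_const; [lia|]. intros; apply H; lia. Qed.

Lemma slot_sg : forall n a l r s x, torus n x -> (S l <= r <= n)%nat -> (1 <= s <= n - 1)%nat ->
  sg n (gfun n a l r s) x (gvec n a l r s x).
Proof. intros. unfold gfun, gvec. decb; try lia.
  all: first [ apply sg_gratio; auto; lia | apply sg_gPsiL; auto; lia | apply sg_gXX; auto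
             | apply sg_Hf; auto | apply sg_gPhi; auto; lia | apply sg_gPsiR; auto; lia ]. Qed.

Lemma slot_fi : forall n a l r s x, torus n x -> (S l <= r <= n)%nat -> (1 <= s <= n - 1)%nat ->
  (forall i, (1 <= i <= l)%nat -> a i = 0) -> (forall i, (r < i <= n)%nat -> a i = 0) ->
  br n (gvec n a l r s x) (vP a x n) = 0.
Proof. intros n a l r s x Ht Hr Hs Ha Hb. unfold gvec. decb; try lia.
  all: try apply br_self.
  all: first [ apply fi_ratio; try lia; (apply Ha; lia) || (apply Hb; lia)
    | apply fi_PsiL; auto; lia
    | apply fi_XX; try lia; [apply vv_zero; intros; apply Ha; lia|apply vv_zero; intros; apply Ha; lia
        |apply (vv_high a x r n); auto; lia|apply (vv_high a x r n); auto; lia]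
    | apply fi_Phi; lia
    | apply fi_PsiR; try lia; apply (vv_high a x r n); auto; lia ]. Qed.

Lemma slot_inv : forall n a l r s eps, (S l <= r <= n)%nat -> (1 <= s <= n - 1)%nat ->
  (forall i, (1 <= i <= l)%nat -> a i = 0) -> (forall i, (r < i <= n)%nat -> a i = 0) ->
  invariant n a eps (gfun n a l r s).
Proof. intros n a l r s eps Hr Hs Ha Hb x Hd. unfold gfun. decb; try lia.
  all: try (apply Hf_kahan; auto).
  all: first [ apply inv_ratio; auto; try lia; rewrite (vv_zero a x (S s)), (vv_zero a x (s - 1)); auto; intros; apply Ha; lia
    | apply inv_ratio; auto; try lia; rewrite (vv_high a x r n (S s)), (vv_high a x r n (s - 1)); auto; lia
    | apply inv_PsiL; auto; lia
    | apply inv_XX; auto; try lia; [apply vv_zero; intros; apply Ha; lia|apply vv_zero; intros; apply Ha; lia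
        |apply (vv_high a x r n); auto; lia|apply (vv_high a x r n); auto; lia]
    | apply inv_Phi; auto; lia
    | apply inv_PsiR; auto; try lia; apply (vv_high a x r n); auto; lia ]. Qed.

Definition gzeta n (a : point) l r s (x : point) : nat -> R :=
  if Nat.ltb s l then vE s
  else if Nat.eqb s l then (if Nat.leb (S (S l)) r then vE l else if Nat.ltb r n then vE l else vE (S l))
  else if Nat.eqb s (S l) then vE (S l)
  else if Nat.ltb s r then (fun i => a s * x s * vE (S l) i - a (S l) * x (S l) * vE s i)
  else if Nat.eqb s r then (fun i => a r * x r * vE (S l) i - a (S l) * x (S l) * vE r i)
  else vE s.

Ltac zero_a Ha Hb := repeat match goal with
  | |- context [?a ?i] => first [rewrite (Ha i) by lia | rewrite (Hb i) by lia] end.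

Lemma gs_offdiag : forall n a l r x p q, (S l <= r <= n)%nat ->
  (forall i, (1 <= i <= l)%nat -> a i = 0) -> (forall i, (r < i <= n)%nat -> a i = 0) ->
  (p < n - 1)%nat -> (q < n - 1)%nat -> p <> q ->
  ((if Nat.eqb (S p) (S l) then n else p) <= (if Nat.eqb (S q) (S l) then n else q))%nat ->
  sum1 (fun i => gzeta n a l r (S p) x i * gvec n a l r (S q) x i) n = 0.
Proof. intros n a l r x p q Hr Ha Hb Hp Hq Hne Hrho.
  revert Hrho. unfold gzeta, gvec. decb; intros Hrho; try lia; cbv beta iota.
  all: first [rewrite sum1_vE by lia | rewrite dot2 by lia].
  all: unfold vratio, vPsiL, vPhi, vPsiR, vXX, vP, vE; decb; try lia.
  all: zero_a Ha Hb.
  all: unfold Rdiv; ring.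
Qed.

Lemma nz_mult : forall u v, u <> 0 -> v <> 0 -> u * v <> 0.
Proof. intros. apply Rmult_integral_contrapositive_currified; auto. Qed.
Lemma nz_inv : forall u, u <> 0 -> / u <> 0.
Proof. intros. apply Rinv_neq_0_compat; auto. Qed.

Ltac nzt H := repeat first [apply nz_mult | apply nz_inv]; try assumption; try (apply H; lia).

Lemma d_ratio : forall n x s, torus n x -> (1 <= s)%nat -> (S s <= n)%nat ->
  sum1 (fun i => vE s i * vratio s x i) n <> 0.
Proof. intros. rewrite sum1_vE by lia. unfold vratio, vE. decb; try lia.
  replace (x s / x (S s) * (1 - 0)) with (x s * / x (S s)) by (unfold Rdiv; ring).
  nzt H. Qed.

Lemma d_PsiL : forall n a l x, torus n x -> (1 <= l)%nat -> (S l <= n)%nat ->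
  Hf n a x - vv a x (S l) <> 0 -> sum1 (fun i => vE l i * vPsiL n a l x i) n <> 0.
Proof. intros. rewrite sum1_vE by lia. unfold vPsiL, gPsiL, vP, vE. decb; try lia.
  replace (x l * (Hf n a x - vv a x (S l)) / x (S l) * (1 - 0) + x l / x (S l) * (a l * x l - a l * x l))
    with (x l * (Hf n a x - vv a x (S l)) * / x (S l)) by (unfold Rdiv; ring).
  nzt H. Qed.

Lemma d_XX : forall n l r x, torus n x -> (1 <= l)%nat -> (S r <= n)%nat -> (l < S r)%nat ->
  sum1 (fun i => vE l i * vXX l r x i) n <> 0.
Proof. intros. rewrite sum1_vE by lia. unfold vXX, gXX, vE. decb; try lia.
  replace (x l * x (S r) * (1 + 0)) with (x l * x (S r)) by ring.
  nzt H. Qed.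

Lemma d_H : forall n a l x, torus n x -> a (S l) <> 0 -> (S l <= n)%nat ->
  sum1 (fun i => vE (S l) i * vP a x n i) n <> 0.
Proof. intros. rewrite sum1_vE by lia. unfold vP. decb; try lia.
  nzt H. Qed.

Lemma d_Phi : forall n a l s x, torus n x -> a (S l) <> 0 -> (S l < s)%nat -> (s <= n)%nat ->
  vv a x s <> 0 -> Hf n a x - vv a x s <> 0 ->
  sum1 (fun i => (a s * x s * vE (S l) i - a (S l) * x (S l) * vE s i) * vPhi n a s x i) n <> 0.
Proof. intros. rewrite dot2 by lia.
  assert (E : vv a x s = vv a x (s - 1) + a s * x s).
  { destruct s; [lia|]. rewrite vv_S. replace (S s - 1)%nat with s by lia. auto. }
  unfold vPhi, gPhi, vP, vE. decb; try lia.
  match goal with |- ?L <> 0 => replace L with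
    (a (S l) * x (S l) * vv a x s * (Hf n a x - vv a x s) * / x s) end.
  2:{ rewrite E. field. apply H; lia. }
  nzt H. Qed.

Lemma d_PsiR : forall n a l r x, torus n x -> a (S l) <> 0 -> (S l < r)%nat -> (S r <= n)%nat ->
  vv a x r <> 0 ->
  sum1 (fun i => (a r * x r * vE (S l) i - a (S l) * x (S l) * vE r i) * vPsiR a r x i) n <> 0.
Proof. intros. rewrite dot2 by lia.
  assert (E : vv a x r = vv a x (r - 1) + a r * x r).
  { destruct r; [lia|]. rewrite vv_S. replace (S r - 1)%nat with r by lia. auto. }
  unfold vPsiR, gPsiR, vP, vE. decb; try lia.
  match goal with |- ?L <> 0 => replace L with
    (a (S l) * x (S l) * x (S r) * / x r * vv a x r) end.
  2:{ rewrite E. field. apply H; lia. }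
  nzt H. Qed.

Lemma gs_diag : forall n a l r x p, (S l <= r <= n)%nat -> torus n x ->
  (forall i, (1 <= i <= l)%nat -> a i = 0) -> a (S l) <> 0 ->
  (forall s, (S l <= s < r)%nat -> Hf n a x - vv a x s <> 0) ->
  (forall j, (S l <= j <= n)%nat -> vv a x j <> 0) ->
  (p < n - 1)%nat ->
  sum1 (fun i => gzeta n a l r (S p) x i * gvec n a l r (S p) x i) n <> 0.
Proof. intros n a l r x p Hr Ht Ha Hal Hu Hv Hp.
  unfold gzeta, gvec. decb; try lia; cbv beta iota.
  all: first [ apply d_ratio; auto; lia
    | apply d_PsiL; auto; try lia; apply Hu; lia
    | apply d_XX; auto; lia
    | apply d_H; auto; lia
    | apply d_Phi; auto; try lia; [apply Hv; lia | apply Hu; lia]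
    | apply d_PsiR; auto; try lia; apply Hv; lia ]. Qed.

Lemma exists_r : forall n (a : point), (exists i, (1 <= i <= n)%nat /\ a i <> 0) ->
  exists r, (1 <= r <= n)%nat /\ a r <> 0 /\ forall i, (r < i <= n)%nat -> a i = 0.
Proof. induction n; intros a [i [Hi Ha]]. lia.
  destruct (Req_dec (a (S n)) 0) as [E|E].
  - destruct (IHn a) as [r [Hr [Har Hz]]]. exists i. split; auto.
    split; [lia|]. destruct (Nat.eq_dec i (S n)); [subst; contradiction|lia].
    exists r. split; [lia|]. split; auto. intros j Hj. destruct (Nat.eq_dec j (S n)). subst; auto.
    apply Hz; lia.
  - exists (S n). split; [lia|]. split; auto. intros; lia. Qed.

Lemma perturb_u : forall n a y c delta (idx : list nat), torus n y -> (1 <= c <= n)%nat -> a c <> 0 ->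
  0 < delta -> (forall j, In j idx -> (j < c)%nat) ->
  exists t, Rabs (t - y c) < delta /\ torus n (upd y c t) /\
    forall j, In j idx -> Hf n a (upd y c t) - vv a (upd y c t) j <> 0.
Proof. intros n a y c delta idx Hy Hc Ha Hd Hidx.
  destruct (avoid (0 :: map (fun j => y c - (Hf n a y - vv a y j) / a c) idx) (y c - delta) (y c + delta))
    as [t [Ht Hn]]. lra.
  exists t. split. apply Rabs_def1; lra. split.
  - intros i Hi. unfold upd. destruct (Nat.eqb_spec i c). intro E; apply Hn; left; auto.
    apply Hy; auto.
  - intros j Hj. unfold Hf. rewrite !vv_upd by lia. specialize (Hidx j Hj).
    destruct (Nat.leb_spec c n); [|lia]. destruct (Nat.leb_spec c j); [lia|].
    intro E. apply Hn. right. apply in_map_iff. exists j. split; auto. unfold Hf.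
    apply (Rmult_eq_reg_r (a c)); auto. field_simplify; auto. lra. Qed.

Lemma u_upd : forall n a x c t s, (1 <= c)%nat -> (c <= s <= n)%nat ->
  Hf n a (upd x c t) - vv a (upd x c t) s = Hf n a x - vv a x s.
Proof. intros. unfold Hf. rewrite !vv_upd by lia. decb; try lia. ring. Qed.

Lemma upd_close : forall (y : point) c t i, Rabs (upd y c t i - y i) <= Rabs (t - y c).
Proof. intros. unfold upd. destruct (Nat.eqb_spec i c). subst; lra.
  rewrite Rminus_diag, Rabs_R0. apply Rabs_pos. Qed.

Lemma superint : forall n a l, (1 <= n)%nat -> (exists i, (1 <= i <= n)%nat /\ a i <> 0) ->
  (l < n)%nat -> a (S l) <> 0 -> (forall i, (1 <= i <= l)%nat -> a i = 0) ->
  exists gs : list (point -> R),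
      length gs = (n - 1)%nat /\
      Forall (first_integral n a (torus n)) gs /\
      func_indep n (torus n) gs /\
      (forall eps, 0 < eps -> Forall (invariant n a eps) gs).
Proof. intros n a l Hn Hex Hl Hal Ha.
  destruct (exists_r n a Hex) as [r [Hr [Har Hz]]].
  assert (Hlr : (S l <= r)%nat).
  { destruct (le_lt_dec (S l) r); auto. exfalso. apply Hal. apply Hz. lia. }
  exists (map (gfun n a l r) (seq 1 (n - 1))). split; [|split; [|split]].
  - rewrite length_map, length_seq; auto.
  - apply Forall_forall. intros g Hg. apply in_map_iff in Hg. destruct Hg as [s [<- Hs]].
    apply in_seq in Hs. intros x Hx. exists (fun i => gvec n a l r s x i / x i). split.
    + apply slot_sg; auto; lia.
    + rewrite fi_br by auto. apply slot_fi; auto; lia.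
  - intros y Hy delta Hd.
    destruct (perturb_u n a y r (delta / 2) (seq (S l) (r - S l)) Hy ltac:(lia) Har ltac:(lra))
      as [t1 [Ht1 [Hy1 Hu1]]].
    { intros j Hj. apply in_seq in Hj. lia. }
    set (y1 := upd y r t1) in *.
    destruct (perturb n a y1 (S l) (delta / 2) (seq (S l) (n - l)) Hy1 ltac:(lia) Hal ltac:(lra))
      as [t2 [Ht2 [Hy2 Hv2]]].
    { intros j Hj. apply in_seq in Hj. lia. }
    exists (upd y1 (S l) t2). split; auto. split.
    + intros i Hi. pose proof (upd_close y1 (S l) t2 i). pose proof (upd_close y r t1 i).
      fold y1 in H0. replace (upd y1 (S l) t2 i - y i) with ((upd y1 (S l) t2 i - y1 i) + (y1 i - y i)) by ring.
      eapply Rle_lt_trans. apply Rabs_triang. lra.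
    + apply (indep_vectors n _ _ (fun b => gvec n a l r (S b) (upd y1 (S l) t2))
        (fun b => gzeta n a l r (S b) (upd y1 (S l) t2))
        (fun b => if Nat.eqb (S b) (S l) then n else b)); auto; rewrite length_map, length_seq.
      * intros b Hb. rewrite nth_map_seq by auto. apply slot_sg; auto; lia.
      * intros p q Hp Hq Hne Hrho. apply gs_offdiag; auto; lia.
      * intros p Hp. apply gs_diag; auto; try lia.
        -- intros s Hs. rewrite u_upd by lia. apply Hu1. apply in_seq. lia.
        -- intros j Hj. apply Hv2. apply in_seq. lia.
  - intros eps Heps. apply Forall_forall. intros g Hg. apply in_map_iff in Hg. destruct Hg as [s [<- Hs]].
    apply in_seq in Hs. apply slot_inv; auto; lia. Qed.


Theorem corollary3p3 (n : nat) (a : nat -> R) (l : nat) :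
  (1 <= n)%nat ->
  (exists i, (1 <= i <= n)%nat /\ a i <> 0) ->
  (* l is the smallest integer >= 0 with a_{l+1} <> 0 *)
  (l < n)%nat -> a (S l) <> 0 -> (forall i, (1 <= i <= l)%nat -> a i = 0) ->
  (* Liouville integrability *)
  ((forall eps, 0 < eps ->
      poisson_map n a eps /\ Forall (invariant n a eps) (liouville_list n a l))
   /\ involutive n (torus n) (liouville_list n a l)
   /\ (~ (Nat.odd n = true /\ l = (n - 1)%nat) ->
       func_indep n (torus n) (liouville_list n a l)))
  /\
  (* superintegrability *)
  (exists gs : list (point -> R),
      length gs = (n - 1)%nat /\
      Forall (first_integral n a (torus n)) gs /\
      func_indep n (torus n) gs /\
      (forall eps, 0 < eps -> Forall (invariant n a eps) gs)).
Proof.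
  intros Hn Hex Hl Hal Ha. split.
  - split; [|split].
    + intros eps Heps. split. apply poisson_ok. apply liouville_invariant; auto.
    + apply liouville_involutive; auto.
    + intros Hno. apply liouville_func_indep; auto.
  - apply (superint n a l); auto.
Qed.
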